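(* Consider the system \[ \begin{aligned} \dot S_h(t)&=\beta_h-C_{vh}\frac{I_v(t)}{N_v(t)}S_h(t)-\mu_hS_h(t),\\ \dot I_h(t)&=C_{vh}\frac{I_v(t-\tau)}{N_v(t-\tau)}S_h(t-\tau)-\mu_hI_h(t),\\ \dot S_v(t)&=\beta_v-C_{hv}I_h(t)S_v(t)-\mu_vS_v(t),\\ \dot I_v(t)&=C_{hv}I_h(t)S_v(t)-\mu_vI_v(t), \end{aligned} \] with $N_v=S_v+I_v$ and positive parameters $\beta_h,\beta_v,\mu_h,\mu_v,C_{vh},C_{hv}$. Let $E^0=(\beta_h/\mu_h,0,\beta_v/\mu_v,0)^T$ be its disease-free equilibrium and $R_0=\sqrt{C_{vh}C_{hv}\beta_h/(\mu_h^2\mu_v)}$. Then for any $\tau\ge0$, $E^0$ is locally asymptotically stable if $R_0<1$ and unstable if $R_0>1$.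
   Context: The phase space is $C_+=\{\varphi\in C([-\tau,0],\mathbb{R}_+^4):\varphi_3(\theta)+\varphi_4(\theta)>0\ \forall\theta\in[-\tau,0]\}$ with the sup-norm. *)

(* Defs.v *)
From Stdlib Require Import Reals.
Open Scope R_scope.

Definition cont_on (f : R -> R) (a b : R) : Prop :=
  forall x, a <= x <= b -> forall eps, 0 < eps ->
    exists d, 0 < d /\ forall y, a <= y <= b -> Rabs (y - x) < d ->
      Rabs (f y - f x) < eps.

Definition cont_from (f : R -> R) (a : R) : Prop :=
  forall x, a <= x -> forall eps, 0 < eps ->
    exists d, 0 < d /\ forall y, a <= y -> Rabs (y - x) < d ->
      Rabs (f y - f x) < eps.

Definition in_Cplus (tau : R) (p1 p2 p3 p4 : R -> R) : Prop :=
  cont_on p1 (- tau) 0 /\ cont_on p2 (- tau) 0 /\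
  cont_on p3 (- tau) 0 /\ cont_on p4 (- tau) 0 /\
  forall th, - tau <= th <= 0 ->
    0 <= p1 th /\ 0 <= p2 th /\ 0 <= p3 th /\ 0 <= p4 th /\
    0 < p3 th + p4 th.

(* (x1,x2,x3,x4) = (S_h, I_h, S_v, I_v) is a (global) solution on [-tau, +oo)
   of the delayed host-vector system with initial function phi = (p1,..,p4):
   continuous on [-tau,+oo), equal to phi on [-tau,0], and satisfying the
   ODEs for t > 0 (N_v = S_v + I_v). *)
Definition is_solution (bh bv muh muv Cvh Chv tau : R)
    (p1 p2 p3 p4 x1 x2 x3 x4 : R -> R) : Prop :=
  cont_from x1 (- tau) /\ cont_from x2 (- tau) /\
  cont_from x3 (- tau) /\ cont_from x4 (- tau) /\
  (forall th, - tau <= th <= 0 ->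
     x1 th = p1 th /\ x2 th = p2 th /\ x3 th = p3 th /\ x4 th = p4 th) /\
  (forall t, 0 < t ->
     derivable_pt_lim x1 t
       (bh - Cvh * (x4 t / (x3 t + x4 t)) * x1 t - muh * x1 t) /\
     derivable_pt_lim x2 t
       (Cvh * (x4 (t - tau) / (x3 (t - tau) + x4 (t - tau))) * x1 (t - tau)
        - muh * x2 t) /\
     derivable_pt_lim x3 t (bv - Chv * x2 t * x3 t - muv * x3 t) /\
     derivable_pt_lim x4 t (Chv * x2 t * x3 t - muv * x4 t)).

(* sup-norm distance of phi to the point e = (e1,..,e4) is < d
   (max-norm on R^4; the sup over the compact [-tau,0] is attained) *)
Definition phi_near (tau : R) (p1 p2 p3 p4 : R -> R) (e1 e2 e3 e4 d : R) :=
  forall th, - tau <= th <= 0 ->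
    Rabs (p1 th - e1) < d /\ Rabs (p2 th - e2) < d /\
    Rabs (p3 th - e3) < d /\ Rabs (p4 th - e4) < d.

Definition eq_stable (bh bv muh muv Cvh Chv tau e1 e2 e3 e4 : R) : Prop :=
  forall eps, 0 < eps -> exists d, 0 < d /\
    forall p1 p2 p3 p4 x1 x2 x3 x4,
      in_Cplus tau p1 p2 p3 p4 -> phi_near tau p1 p2 p3 p4 e1 e2 e3 e4 d ->
      is_solution bh bv muh muv Cvh Chv tau p1 p2 p3 p4 x1 x2 x3 x4 ->
      forall t, 0 <= t ->
        Rabs (x1 t - e1) < eps /\ Rabs (x2 t - e2) < eps /\
        Rabs (x3 t - e3) < eps /\ Rabs (x4 t - e4) < eps.

Definition eq_attractive (bh bv muh muv Cvh Chv tau e1 e2 e3 e4 : R) : Prop :=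
  exists d, 0 < d /\
    forall p1 p2 p3 p4 x1 x2 x3 x4,
      in_Cplus tau p1 p2 p3 p4 -> phi_near tau p1 p2 p3 p4 e1 e2 e3 e4 d ->
      is_solution bh bv muh muv Cvh Chv tau p1 p2 p3 p4 x1 x2 x3 x4 ->
      forall eps, 0 < eps -> exists T, forall t, T <= t ->
        Rabs (x1 t - e1) < eps /\ Rabs (x2 t - e2) < eps /\
        Rabs (x3 t - e3) < eps /\ Rabs (x4 t - e4) < eps.

Definition loc_asym_stable (bh bv muh muv Cvh Chv tau e1 e2 e3 e4 : R) : Prop :=
  eq_stable bh bv muh muv Cvh Chv tau e1 e2 e3 e4 /\
  eq_attractive bh bv muh muv Cvh Chv tau e1 e2 e3 e4.

Definition eq_unstable (bh bv muh muv Cvh Chv tau e1 e2 e3 e4 : R) : Prop :=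
  ~ eq_stable bh bv muh muv Cvh Chv tau e1 e2 e3 e4.

(* Main.v *)
Require Import Defs.
From Stdlib Require Import Reals Lra Lia Classical.
From Coquelicot Require Import Coquelicot.
Open Scope R_scope.

Lemma finite_delta (n : nat) (Q : nat -> R -> Prop) :
  (forall i, (i < n)%nat -> exists d, 0 < d /\ forall s, 0 <= s -> s < d -> Q i s) ->
  exists d, 0 < d /\ forall i s, (i < n)%nat -> 0 <= s -> s < d -> Q i s.
Proof.
  induction n as [|n IH]; intros H.
  - exists 1; split; [lra|]. intros; lia.
  - destruct IH as [d1 [Hd1 H1]].
    { intros i Hi; apply H; lia. }
    destruct (H n ltac:(lia)) as [d2 [Hd2 H2]].
    exists (Rmin d1 d2); split; [apply Rmin_glb_lt; lra|].
    intros i s Hi Hs Hsd.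
    assert (Rmin d1 d2 <= d1) by apply Rmin_l.
    assert (Rmin d1 d2 <= d2) by apply Rmin_r.
    destruct (Nat.eq_dec i n) as [->|Hne].
    + apply H2; lra.
    + apply H1; [lia|lra|lra].
Qed.

Lemma barrier (n : nat) (h dh : nat -> R -> R) :
  (forall i, (i < n)%nat -> cont_from (h i) 0) ->
  (forall i t, (i < n)%nat -> 0 < t -> derivable_pt_lim (h i) t (dh i t)) ->
  (forall i, (i < n)%nat -> 0 < h i 0) ->
  (forall i t, (i < n)%nat -> 0 < t ->
     (forall j s, (j < n)%nat -> 0 <= s <= t -> 0 <= h j s) -> h i t = 0 -> 0 < dh i t) ->
  forall i t, (i < n)%nat -> 0 <= t -> 0 < h i t.
Proof.
  intros Hc HD H0 Hb i0 t0 Hi0 Ht0.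
  apply Rnot_le_lt; intro Hneg.
  set (E := fun x => 0 <= - x /\ exists i, (i < n)%nat /\ h i (- x) <= 0).
  assert (Hbd : bound E).
  { exists 0; intros x [Hx _]; lra. }
  assert (Hex : exists x, E x).
  { exists (- t0); split; [lra|]. exists i0; split; [auto|]. rewrite Ropp_involutive; auto. }
  destruct (completeness E Hbd Hex) as [m [Hub Hlub]].
  set (ts := - m).
  assert (Hlow : forall s, 0 <= s -> (exists i, (i < n)%nat /\ h i s <= 0) -> ts <= s).
  { intros s Hs Hex2. unfold ts. assert (E (- s)).
    { split; rewrite Ropp_involutive; auto. }
    specialize (Hub _ H). lra. }
  assert (Hglb : forall b, (forall s, 0 <= s -> (exists i, (i < n)%nat /\ h i s <= 0) -> b <= s) -> b <= ts).
  { intros b Hb2. unfold ts. assert (m <= - b).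
    { apply Hlub. intros x [Hx Hx2]. specialize (Hb2 (- x) Hx Hx2). lra. }
    lra. }
  assert (Hts0 : 0 <= ts).
  { apply Hglb. intros; lra. }
  assert (Hbefore : forall s j, 0 <= s < ts -> (j < n)%nat -> 0 < h j s).
  { intros s j Hs Hj. apply Rnot_le_lt; intro Hc2.
    assert (ts <= s) by (apply Hlow; [lra| exists j; auto]). lra. }
  assert (Hat : forall j, (j < n)%nat -> 0 <= h j ts).
  { intros j Hj. destruct (Req_dec ts 0) as [Heq|Hne].
    - rewrite Heq; left; apply H0; auto.
    - apply Rnot_lt_le; intro Hlt.
      destruct (Hc j Hj ts Hts0 (- h j ts) ltac:(lra)) as [d [Hdd Hd2]].
      set (s := Rmax 0 (ts - d/2)).
      assert (Hs1 : 0 <= s) by apply Rmax_l.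
      assert (Hs2 : s < ts).
      { unfold s; apply Rmax_lub_lt; lra. }
      assert (Hs3 : ts - d/2 <= s) by apply Rmax_r.
      specialize (Hd2 s ltac:(lra)).
      assert (Rabs (s - ts) < d) by (rewrite Rabs_left; lra).
      specialize (Hd2 H).
      specialize (Hbefore s j ltac:(lra) Hj).
      apply Rabs_def2 in Hd2. lra. }
  assert (Hsome : exists i, (i < n)%nat /\ h i ts <= 0).
  { apply NNPP; intro Hno.
    assert (Hall : forall i, (i < n)%nat -> 0 < h i ts).
    { intros i Hi. apply Rnot_le_lt; intro. apply Hno; exists i; auto. }
    destruct (finite_delta n (fun i u => 0 < h i (ts + u))) as [d [Hdd Hd2]].
    { intros i Hi. destruct (Hc i Hi ts Hts0 (h i ts) (Hall i Hi)) as [d [Hdd Hd2]].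
      exists d; split; auto. intros u Hu Hud.
      specialize (Hd2 (ts + u) ltac:(lra)).
      assert (Rabs (ts + u - ts) < d) by (rewrite Rabs_right; lra).
      specialize (Hd2 H). apply Rabs_def2 in Hd2. lra. }
    assert (ts + d <= ts); [|lra].
    apply Hglb. intros s Hs [i [Hi Hhi]].
    destruct (Rle_or_lt (ts + d) s); auto.
    destruct (Rlt_or_le s ts).
    - specialize (Hbefore s i ltac:(lra) Hi). lra.
    - specialize (Hd2 i (s - ts) Hi ltac:(lra) ltac:(lra)).
      replace (ts + (s - ts)) with s in Hd2 by ring. lra. }
  destruct Hsome as [i [Hi Hhi]].
  assert (Htspos : 0 < ts).
  { destruct Hts0 as [|Heq]; auto. rewrite <- Heq in Hhi. specialize (H0 i Hi). lra. }
  assert (Hz : h i ts = 0) by (specialize (Hat i Hi); lra).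
  assert (Hpos : 0 < dh i ts).
  { apply Hb; auto. intros j s Hj Hs.
    destruct (Req_dec s ts) as [->|Hne]; [apply Hat; auto|].
    left; apply Hbefore; auto; lra. }
  specialize (HD i ts Hi Htspos (dh i ts) Hpos) as [del Hdel].
  set (k := - Rmin (del/2) (ts/2)).
  assert (Hk1 : Rmin (del/2) (ts/2) <= del/2) by apply Rmin_l.
  assert (Hk2 : Rmin (del/2) (ts/2) <= ts/2) by apply Rmin_r.
  assert (Hk3 : 0 < Rmin (del/2) (ts/2)).
  { apply Rmin_glb_lt; generalize (cond_pos del); lra. }
  assert (Hkne : k <> 0) by (unfold k; lra).
  assert (Hkd : Rabs k < del) by (unfold k; rewrite Rabs_left; generalize (cond_pos del); lra).
  specialize (Hdel k Hkne Hkd).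
  rewrite Hz in Hdel. apply Rabs_def2 in Hdel.
  assert (Hb2 : 0 < h i (ts + k)) by (apply Hbefore; unfold k in *; auto; lra).
  assert (Hq : (h i (ts + k) - 0) / k < 0).
  { unfold Rdiv. rewrite Rminus_0_r. apply Rmult_pos_neg; auto.
    apply Rinv_lt_0_compat; unfold k; lra. }
  lra.
Qed.

Fixpoint sumn (n : nat) (f : nat -> R) : R :=
  match n with O => 0 | S k => sumn k f + f k end.

Definition nrm (n : nat) (u v : nat -> R) : R := sumn n (fun j => Rabs (u j - v j)).

Lemma sumn_le (n : nat) (f g : nat -> R) :
  (forall j, (j < n)%nat -> f j <= g j) -> sumn n f <= sumn n g.
Proof.
  induction n; simpl; intros H; [lra|].
  assert (sumn n f <= sumn n g) by (apply IHn; intros; apply H; lia).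
  assert (f n <= g n) by (apply H; lia). lra.
Qed.

Lemma sumn_const (n : nat) (c : R) : sumn n (fun _ => c) = INR n * c.
Proof. induction n; simpl sumn; [simpl; ring|]. rewrite IHn, S_INR; ring. Qed.

Lemma sumn_nonneg (n : nat) (f : nat -> R) :
  (forall j, (j < n)%nat -> 0 <= f j) -> 0 <= sumn n f.
Proof.
  intros H. replace 0 with (INR n * 0) by ring. rewrite <- sumn_const. apply sumn_le. auto.
Qed.

Lemma nrm_le (n : nat) (u v : nat -> R) (c : R) :
  (forall j, (j < n)%nat -> Rabs (u j - v j) <= c) -> nrm n u v <= INR n * c.
Proof. intros H. rewrite <- sumn_const. apply sumn_le. auto. Qed.

Lemma nrm_comp (n : nat) (u v : nat -> R) (i : nat) :
  (i < n)%nat -> Rabs (u i - v i) <= nrm n u v.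
Proof.
  unfold nrm. induction n; intros Hi; [lia|]. simpl.
  assert (0 <= sumn n (fun j => Rabs (u j - v j))) by (apply sumn_nonneg; intros; apply Rabs_pos).
  destruct (Nat.eq_dec i n) as [->|Hne]; [lra|].
  assert (Rabs (u i - v i) <= sumn n (fun j => Rabs (u j - v j))) by (apply IHn; lia).
  generalize (Rabs_pos (u n - v n)). lra.
Qed.

Lemma nrm_nonneg n u v : 0 <= nrm n u v.
Proof. apply sumn_nonneg; intros; apply Rabs_pos. Qed.

Lemma lip_cont (f : R -> R) (x K : R) :
  0 <= K -> (forall y, Rabs (f y - f x) <= K * Rabs (y - x)) -> continuous f x.
Proof.
  intros HK H. apply continuity_pt_filterlim.
  intros eps Heps. exists (eps / (K + 1)). split.
  { apply Rdiv_lt_0_compat; lra. }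
  intros y [_ Hy]. unfold R_dist in *. simpl in *. unfold Rdist in *.
  eapply Rle_lt_trans; [apply H|].
  apply Rle_lt_trans with ((K + 1) * Rabs (y - x)).
  { generalize (Rabs_pos (y - x)); nra. }
  apply Rmult_lt_compat_l with (r := K + 1) in Hy; [|lra].
  replace ((K + 1) * (eps / (K + 1))) with eps in Hy by (field; lra). lra.
Qed.

Lemma cont_ex_RInt (f : R -> R) (a b : R) :
  (forall x, continuous f x) -> ex_RInt f a b.
Proof. intros H. apply (ex_RInt_continuous (V:=R_CompleteNormedModule)). intros; apply H. Qed.

Lemma RInt_diff (g : R -> R) (a b : R) :
  (forall x, continuous g x) -> RInt g 0 a - RInt g 0 b = RInt g b a.
Proof.
  intros Hc.
  assert (H := RInt_Chasles g 0 b a (cont_ex_RInt g 0 b Hc) (cont_ex_RInt g b a Hc)).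
  change plus with Rplus in H. rewrite <- H. ring.
Qed.

Lemma RInt_bound (g : R -> R) (a b M : R) :
  (forall x, continuous g x) -> (forall x, Rmin a b <= x <= Rmax a b -> Rabs (g x) <= M) ->
  Rabs (RInt g a b) <= M * Rabs (b - a).
Proof.
  intros Hc HM. destruct (Rle_or_lt a b) as [Hab|Hab].
  - rewrite (Rabs_right (b - a)) by lra. rewrite (Rmult_comm M).
    apply abs_RInt_le_const; [lra| apply cont_ex_RInt; auto|].
    intros t Ht; apply HM. rewrite Rmin_left, Rmax_right by lra. auto.
  - rewrite <- opp_RInt_swap by (apply cont_ex_RInt; auto).
    change opp with Ropp. rewrite Rabs_Ropp.
    rewrite (Rabs_left (b - a)) by lra. replace (M * - (b - a)) with ((a - b) * M) by ring.
    apply abs_RInt_le_const; [lra| apply cont_ex_RInt; auto|].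
    intros t Ht; apply HM. rewrite Rmin_right, Rmax_left by lra. auto.
Qed.

Lemma Rmax0_lip (t s : R) : Rabs (Rmax t 0 - Rmax s 0) <= Rabs (t - s).
Proof.
  unfold Rmax. destruct (Rle_dec t 0), (Rle_dec s 0);
  repeat (first [rewrite Rabs_right by lra | rewrite Rabs_left by lra | rewrite Rabs_R0]);
  try (apply Rabs_def2 || idtac);
  unfold Rabs; repeat destruct Rcase_abs; lra.
Qed.

Fixpoint picard (tau : R) (phi : nat -> R) (F : nat -> (nat -> R) -> (nat -> R) -> R)
  (k : nat) : R -> nat -> R :=
  match k with
  | O => fun _ i => phi i
  | S k' => fun t i => phi i +
      RInt (fun s => F i (picard tau phi F k' s) (picard tau phi F k' (s - tau))) 0 (Rmax t 0)
  end.

Definition FLip n (F : nat -> (nat -> R) -> (nat -> R) -> R) L :=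
  forall i u v u' v', (i < n)%nat -> Rabs (F i u v - F i u' v') <= L * (nrm n u u' + nrm n v v').
Definition FBnd n (F : nat -> (nat -> R) -> (nat -> R) -> R) B :=
  forall i u v, (i < n)%nat -> Rabs (F i u v) <= B.

Lemma integrand_lip n F L tau (X : R -> nat -> R) K i :
  0 <= L -> 0 <= K -> FLip n F L -> (i < n)%nat ->
  (forall j t s, (j < n)%nat -> Rabs (X t j - X s j) <= K * Rabs (t - s)) ->
  forall y x, Rabs (F i (X y) (X (y - tau)) - F i (X x) (X (x - tau))) <= (2 * INR n * K * L) * Rabs (y - x).
Proof.
  intros HL HK HF Hi HX y x.
  eapply Rle_trans; [apply HF; auto|].
  assert (nrm n (X y) (X x) <= INR n * (K * Rabs (y - x))) by (apply nrm_le; intros; auto).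
  assert (nrm n (X (y - tau)) (X (x - tau)) <= INR n * (K * Rabs (y - x))).
  { apply nrm_le; intros. replace (y - x) with ((y - tau) - (x - tau)) by ring. auto. }
  assert (0 <= INR n) by apply pos_INR.
  replace (2 * INR n * K * L * Rabs (y - x)) with (L * (INR n * (K * Rabs (y - x)) + INR n * (K * Rabs (y - x)))) by ring.
  apply Rmult_le_compat_l; lra.
Qed.

Lemma integrand_cont n F L tau (X : R -> nat -> R) K i :
  0 <= L -> 0 <= K -> FLip n F L -> (i < n)%nat ->
  (forall j t s, (j < n)%nat -> Rabs (X t j - X s j) <= K * Rabs (t - s)) ->
  forall x, continuous (fun s => F i (X s) (X (s - tau))) x.
Proof.
  intros. apply lip_cont with (K := 2 * INR n * K * L).
  { generalize (pos_INR n); intros; repeat apply Rmult_le_pos; lra. }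
  intros y. eapply integrand_lip; eauto.
Qed.

Lemma picard_neg tau phi F k t i : t <= 0 -> picard tau phi F k t i = phi i.
Proof.
  intros Ht. destruct k; simpl; auto.
  rewrite Rmax_right by lra. rewrite RInt_point. change zero with 0. ring.
Qed.

Lemma picard_lip n tau phi F L B :
  0 <= L -> 0 <= B -> FLip n F L -> FBnd n F B ->
  forall k j t s, (j < n)%nat ->
    Rabs (picard tau phi F k t j - picard tau phi F k s j) <= B * Rabs (t - s).
Proof.
  intros HL HB HF HFB k. induction k; intros j t s Hj; simpl.
  - rewrite Rminus_diag, Rabs_R0. apply Rmult_le_pos; auto; apply Rabs_pos.
  - replace (phi j + RInt (fun s0 => F j (picard tau phi F k s0) (picard tau phi F k (s0 - tau))) 0 (Rmax t 0) -
     (phi j + RInt (fun s0 => F j (picard tau phi F k s0) (picard tau phi F k (s0 - tau))) 0 (Rmax s 0)))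
     with (RInt (fun s0 => F j (picard tau phi F k s0) (picard tau phi F k (s0 - tau))) 0 (Rmax t 0) -
           RInt (fun s0 => F j (picard tau phi F k s0) (picard tau phi F k (s0 - tau))) 0 (Rmax s 0)) by ring.
    assert (Hc := integrand_cont n F L tau (picard tau phi F k) B j HL HB HF Hj IHk).
    rewrite RInt_diff by auto.
    eapply Rle_trans; [apply RInt_bound; [auto| intros; apply HFB; auto]|].
    apply Rmult_le_compat_l; auto.
    apply Rmax0_lip.
Qed.

Lemma lip_abs_diff (f g : R -> R) K1 K2 :
  0 <= K1 -> 0 <= K2 ->
  (forall y x, Rabs (f y - f x) <= K1 * Rabs (y - x)) ->
  (forall y x, Rabs (g y - g x) <= K2 * Rabs (y - x)) ->
  forall x, continuous (fun s => Rabs (f s - g s)) x.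
Proof.
  intros H1 H2 Hf Hg x. apply lip_cont with (K := K1 + K2); [lra|].
  intros y. eapply Rle_trans; [apply Rabs_triang_inv2|].
  replace (f y - g y - (f x - g x)) with ((f y - f x) - (g y - g x)) by ring.
  eapply Rle_trans; [apply Rabs_triang|]. rewrite Rabs_Ropp.
  specialize (Hf y x); specialize (Hg y x). lra.
Qed.

Lemma RInt_pow (c : R) (m : nat) (T : R) :
  RInt (fun s => c * s ^ m) 0 T = c * T ^ (S m) / INR (S m).
Proof.
  assert (HS : INR (S m) <> 0) by (apply not_0_INR; lia).
  apply is_RInt_unique.
  replace (c * T ^ S m / INR (S m)) with (minus (c * T ^ S m / INR (S m)) (c * 0 ^ S m / INR (S m))).
  2:{ simpl. change minus with Rminus. field. auto. }
  apply (is_RInt_derive (fun s => c * s ^ S m / INR (S m))).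
  - intros x _. auto_derive; auto. simpl. field. auto.
  - intros x _. apply (ex_derive_continuous (K:=R_AbsRing) (V:=R_NormedModule)). auto_derive. auto.
Qed.

Lemma RInt_minus_R (f g : R -> R) a b : ex_RInt f a b -> ex_RInt g a b ->
  RInt (fun x => f x - g x) a b = RInt f a b - RInt g a b.
Proof. intros. apply (RInt_minus f g a b); auto. Qed.

Lemma pow_mono_pos (m : nat) (x y : R) : 0 <= x <= y -> x ^ m <= y ^ m.
Proof. apply pow_incr. Qed.

Definition ak (n : nat) (B K : R) (k : nat) (r : R) : R :=
  INR n * B * K ^ k * r ^ (S k) / INR (Factorial.fact (S k)).

Lemma ak_mono n B K k x y : 0 <= B -> 0 <= K -> 0 <= x <= y -> ak n B K k x <= ak n B K k y.
Proof.
  intros HB HK Hxy. unfold ak, Rdiv.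
  apply Rmult_le_compat_r; [left; apply Rinv_0_lt_compat, lt_0_INR, Factorial.lt_O_fact|].
  apply Rmult_le_compat_l; [|apply pow_incr; auto].
  apply Rmult_le_pos; [apply Rmult_le_pos; [apply pos_INR|auto]|apply pow_le; auto].
Qed.

Lemma ak_nonneg n B K k x : 0 <= B -> 0 <= K -> 0 <= x -> 0 <= ak n B K k x.
Proof.
  intros. unfold ak, Rdiv. apply Rmult_le_pos; [|left; apply Rinv_0_lt_compat, lt_0_INR, Factorial.lt_O_fact].
  repeat apply Rmult_le_pos; auto; try apply pos_INR; apply pow_le; auto.
Qed.

Lemma picard_S tau phi F k t i : picard tau phi F (S k) t i =
  phi i + RInt (fun s => F i (picard tau phi F k s) (picard tau phi F k (s - tau))) 0 (Rmax t 0).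
Proof. reflexivity. Qed.

Lemma picard_delta n tau phi F L B :
  0 <= tau -> 0 <= L -> 0 <= B -> FLip n F L -> FBnd n F B ->
  forall k t, nrm n (picard tau phi F (S k) t) (picard tau phi F k t)
              <= ak n B (2 * INR n * L) k (Rmax t 0).
Proof.
  intros Htau HL HB HF HFB.
  assert (HK : 0 <= 2 * INR n * L) by (generalize (pos_INR n); nra).
  assert (HT0 : forall t, 0 <= Rmax t 0) by (intros; apply Rmax_r).
  induction k; intros t.
  - unfold ak. replace (INR n * B * (2 * INR n * L) ^ 0 * Rmax t 0 ^ 1 / INR (Factorial.fact 1))
      with (INR n * (B * Rmax t 0)) by (simpl; field).
    apply nrm_le. intros j Hj. simpl.
    rewrite Rplus_minus_l.
    eapply Rle_trans; [apply RInt_bound|].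
    + intros x. apply lip_cont with (K := 0); [lra|]. intros y. rewrite Rminus_diag, Rabs_R0. lra.
    + intros; apply HFB; auto.
    + rewrite Rminus_0_r, Rabs_right by (apply Rle_ge, HT0). lra.
  - set (K := 2 * INR n * L) in *. set (T := Rmax t 0).
    set (C := INR n * B * K ^ k / INR (Factorial.fact (S k))).
    assert (HC : 0 <= C).
    { unfold C, Rdiv. apply Rmult_le_pos; [|left; apply Rinv_0_lt_compat, lt_0_INR, Factorial.lt_O_fact].
      apply Rmult_le_pos; [apply Rmult_le_pos; [apply pos_INR|auto]|apply pow_le; auto]. }
    assert (Hak : forall s, ak n B K k s = C * s ^ (S k)).
    { intros s. unfold ak, C. field. apply not_0_INR. generalize (Factorial.lt_O_fact (S k)); lia. }
    assert (Hlip := picard_lip n tau phi F L B HL HB HF HFB).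
    apply Rle_trans with (INR n * (2 * L * (C * T ^ (S (S k)) / INR (S (S k))))).
    + apply nrm_le. intros j Hj.
      rewrite (picard_S tau phi F (S k) t j), (picard_S tau phi F k t j).
      set (g1 := fun s => F j (picard tau phi F (S k) s) (picard tau phi F (S k) (s - tau))).
      set (g0 := fun s => F j (picard tau phi F k s) (picard tau phi F k (s - tau))).
      assert (Hg1 := integrand_lip n F L tau (picard tau phi F (S k)) B j HL HB HF Hj (Hlip (S k))).
      assert (Hg0 := integrand_lip n F L tau (picard tau phi F k) B j HL HB HF Hj (Hlip k)).
      assert (HKg : 0 <= 2 * INR n * B * L) by (generalize (pos_INR n); intros; repeat apply Rmult_le_pos; lra).
      assert (Hc1 : forall x, continuous g1 x) by (intros x; apply lip_cont with (2 * INR n * B * L); [auto|intros y; unfold g1, g0; apply Hg1 || apply Hg0]).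
      assert (Hc0 : forall x, continuous g0 x) by (intros x; apply lip_cont with (2 * INR n * B * L); [auto|intros y; unfold g1, g0; apply Hg1 || apply Hg0]).
      fold T. replace (phi j + RInt g1 0 T - (phi j + RInt g0 0 T)) with (RInt g1 0 T - RInt g0 0 T) by ring.
      assert (HT : 0 <= T) by apply HT0.
      rewrite <- RInt_minus_R by (apply cont_ex_RInt; auto).
      assert (Habs : forall x, continuous (fun s => Rabs (g1 s - g0 s)) x).
      { apply lip_abs_diff with (2 * INR n * B * L) (2 * INR n * B * L); auto. }
      eapply Rle_trans; [apply abs_RInt_le; [auto|]|].
      { apply (ex_RInt_minus (V:=R_NormedModule)); apply cont_ex_RInt; auto. }
      replace (2 * L * (C * T ^ S (S k) / INR (S (S k)))) with ((2 * L * C) * T ^ S (S k) / INR (S (S k))) by (field; apply not_0_INR; lia).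
      rewrite <- RInt_pow.
      apply RInt_le; auto.
      * apply cont_ex_RInt; auto.
      * apply cont_ex_RInt. intros x. apply (ex_derive_continuous (K:=R_AbsRing) (V:=R_NormedModule)). auto_derive. auto.
      * intros y Hy. simpl.
        unfold g1, g0. eapply Rle_trans; [apply HF; auto|].
        assert (H1 := IHk y). assert (H2 := IHk (y - tau)).
        rewrite Rmax_left in H1 by lra.
        assert (Hm : 0 <= Rmax (y - tau) 0 <= y) by (split; [apply Rmax_r| apply Rmax_lub; lra]).
        assert (H3 := ak_mono n B K k _ _ HB HK Hm).
        rewrite Hak in H1, H2. rewrite !Hak in H3.
        replace (2 * L * C * (y * y ^ k)) with (L * (C * y ^ S k + C * y ^ S k)) by (simpl; ring).
        apply Rmult_le_compat_l; auto. lra.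
    + right. unfold ak, C. change (Factorial.fact (S (S k))) with (S (S k) * Factorial.fact (S k))%nat; rewrite mult_INR. unfold K. simpl pow. field.
      split; [apply not_0_INR; generalize (Factorial.lt_O_fact (S k)); lia|apply not_0_INR; lia].
Qed.

Definition Sx (m : nat) (r : R) := sum_f_R0 (fun i => / INR (Factorial.fact i) * r ^ i) m.

Lemma Sx_cv r : forall eps, 0 < eps -> exists N, forall m, (N <= m)%nat -> Rabs (Sx m r - exp r) < eps.
Proof.
  intros eps He. destruct (proj2_sig (exist_exp r) eps ltac:(lra)) as [N HN].
  exists N. intros m Hm. apply (HN m). lia.
Qed.

Lemma Sx_mono r m p : 0 <= r -> (m <= p)%nat -> Sx m r <= Sx p r.
Proof.
  intros Hr Hmp. induction Hmp; [lra|]. unfold Sx in *. rewrite tech5.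
  assert (0 <= / INR (Factorial.fact (S m0)) * r ^ S m0).
  { apply Rmult_le_pos; [left; apply Rinv_0_lt_compat, lt_0_INR, Factorial.lt_O_fact|apply pow_le; auto]. }
  lra.
Qed.

Lemma Sx_le_exp r m : 0 <= r -> Sx m r <= exp r.
Proof.
  intros Hr. apply Rnot_lt_le; intro H.
  destruct (Sx_cv r (Sx m r - exp r) ltac:(lra)) as [N HN].
  specialize (HN (Nat.max N m) ltac:(lia)).
  assert (Sx m r <= Sx (Nat.max N m) r) by (apply Sx_mono; auto; lia).
  apply Rabs_def2 in HN. lra.
Qed.

Lemma picard_cauchy_bound n tau phi F L B T :
  (0 < n)%nat -> 0 <= tau -> 0 < L -> 0 <= B -> FLip n F L -> FBnd n F B -> 0 <= T ->
  forall k m t i, (k <= m)%nat -> t <= T -> (i < n)%nat ->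
    Rabs (picard tau phi F m t i - picard tau phi F k t i) <=
    INR n * B / (2 * INR n * L) * (Sx m (2 * INR n * L * T) - Sx k (2 * INR n * L * T)).
Proof.
  intros Hn Htau HL HB HF HFB HT k m t i Hkm Ht Hi.
  assert (HnR : 0 < INR n) by (apply lt_0_INR; auto).
  set (K := 2 * INR n * L).
  assert (HK : 0 < K) by (unfold K; nra).
  induction Hkm.
  - rewrite !Rminus_diag, Rabs_R0. lra.
  - eapply Rle_trans.
    { replace (picard tau phi F (S m) t i - picard tau phi F k t i) with
        ((picard tau phi F (S m) t i - picard tau phi F m t i) + (picard tau phi F m t i - picard tau phi F k t i)) by ring.
      apply Rabs_triang. }
    assert (H1 := nrm_comp n (picard tau phi F (S m) t) (picard tau phi F m t) i Hi).
    assert (H2 := picard_delta n tau phi F L B Htau (Rlt_le _ _ HL) HB HF HFB m t).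
    assert (H3 : ak n B (2 * INR n * L) m (Rmax t 0) <= ak n B (2 * INR n * L) m T).
    { apply ak_mono; [auto|nra|]. split; [apply Rmax_r|apply Rmax_lub; lra]. }
    assert (H4 : ak n B K m T = INR n * B / K * (/ INR (Factorial.fact (S m)) * (K * T) ^ S m)).
    { unfold ak. rewrite Rpow_mult_distr. simpl pow. field. repeat split; (lra || (apply not_0_INR; generalize (Factorial.lt_O_fact (S m)); lia)). }
    fold K in H2, H3. assert (HS : Sx (S m) (K * T) = Sx m (K * T) + / INR (Factorial.fact (S m)) * (K * T) ^ S m) by (unfold Sx; apply tech5). rewrite HS.
    lra.
Qed.

Definition Xlim tau phi F (t : R) (i : nat) : R := real (Lim_seq (fun k => picard tau phi F k t i)).

Lemma epsk_small n B K r : forall eta, 0 < eta -> exists N, forall k, (N <= k)%nat ->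
  Rabs (INR n * B / K * (exp r - Sx k r)) < eta.
Proof.
  intros eta He. set (c := INR n * B / K).
  destruct (Sx_cv r (eta / (Rabs c + 1))) as [N HN].
  { apply Rdiv_lt_0_compat; [lra|generalize (Rabs_pos c); lra]. }
  exists N. intros k Hk. specialize (HN k Hk). rewrite Rabs_mult.
  rewrite Rabs_minus_sym in HN.
  apply Rle_lt_trans with ((Rabs c + 1) * Rabs (exp r - Sx k r)).
  { generalize (Rabs_pos (exp r - Sx k r)); nra. }
  apply Rmult_lt_compat_l with (r := Rabs c + 1) in HN; [|generalize (Rabs_pos c); lra].
  replace ((Rabs c + 1) * (eta / (Rabs c + 1))) with eta in HN by (field; generalize (Rabs_pos c); lra).
  lra.
Qed.

Lemma Xlim_conv n tau phi F L B :
  (0 < n)%nat -> 0 <= tau -> 0 < L -> 0 <= B -> FLip n F L -> FBnd n F B ->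
  forall t i, (i < n)%nat -> is_lim_seq (fun k => picard tau phi F k t i) (Xlim tau phi F t i).
Proof.
  intros Hn Htau HL HB HF HFB t i Hi. unfold Xlim.
  apply Lim_seq_correct'. apply ex_lim_seq_cauchy_corr.
  intros eps. set (T := Rmax t 0). set (K := 2 * INR n * L).
  assert (HT : 0 <= T) by apply Rmax_r.
  assert (HtT : t <= T) by apply Rmax_l.
  assert (HnR : 0 < INR n) by (apply lt_0_INR; auto).
  assert (HK : 0 < K) by (unfold K; nra).
  assert (Hr : 0 <= K * T) by nra.
  destruct (epsk_small n B K (K * T) (eps / 2)) as [N HN]; [generalize (cond_pos eps); lra|].
  exists N. intros p q Hp Hq.
  assert (Hc : 0 <= INR n * B / K) by (apply Rdiv_le_0_compat; nra).
  assert (H1 := picard_cauchy_bound n tau phi F L B T Hn Htau HL HB HF HFB HT N p t i Hp HtT Hi).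
  assert (H2 := picard_cauchy_bound n tau phi F L B T Hn Htau HL HB HF HFB HT N q t i Hq HtT Hi).
  fold K in H1, H2.
  specialize (HN N (le_n N)).
  assert (Sx p (K * T) <= exp (K * T)) by (apply Sx_le_exp; auto).
  assert (Sx q (K * T) <= exp (K * T)) by (apply Sx_le_exp; auto).
  assert (Sx N (K * T) <= exp (K * T)) by (apply Sx_le_exp; auto).
  rewrite Rabs_right in HN by (apply Rle_ge, Rmult_le_pos; lra).
  replace (picard tau phi F p t i - picard tau phi F q t i) with
    ((picard tau phi F p t i - picard tau phi F N t i) - (picard tau phi F q t i - picard tau phi F N t i)) by ring.
  eapply Rle_lt_trans; [apply Rabs_triang|]. rewrite Rabs_Ropp.
  apply Rle_lt_trans with (2 * (INR n * B / K * (exp (K * T) - Sx N (K * T)))); [|lra].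
  assert (INR n * B / K * (Sx p (K * T) - Sx N (K * T)) <= INR n * B / K * (exp (K * T) - Sx N (K * T)))
    by (apply Rmult_le_compat_l; lra).
  assert (INR n * B / K * (Sx q (K * T) - Sx N (K * T)) <= INR n * B / K * (exp (K * T) - Sx N (K * T)))
    by (apply Rmult_le_compat_l; lra).
  lra.
Qed.

Lemma Xlim_bound n tau phi F L B T :
  (0 < n)%nat -> 0 <= tau -> 0 < L -> 0 <= B -> FLip n F L -> FBnd n F B -> 0 <= T ->
  forall k t i, t <= T -> (i < n)%nat ->
    Rabs (Xlim tau phi F t i - picard tau phi F k t i) <=
    INR n * B / (2 * INR n * L) * (exp (2 * INR n * L * T) - Sx k (2 * INR n * L * T)).
Proof.
  intros Hn Htau HL HB HF HFB HT k t i Ht Hi.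
  assert (HnR : 0 < INR n) by (apply lt_0_INR; auto).
  assert (Hc : 0 <= INR n * B / (2 * INR n * L)) by (apply Rdiv_le_0_compat; nra).
  assert (Hr : 0 <= 2 * INR n * L * T) by (apply Rmult_le_pos; [nra|lra]).
  apply Rle_plus_epsilon. intros eta He.
  assert (Hl := Xlim_conv n tau phi F L B Hn Htau HL HB HF HFB t i Hi).
  apply is_lim_seq_Reals in Hl. destruct (Hl eta He) as [N HN].
  set (p := Nat.max N k). specialize (HN p ltac:(unfold p; lia)). unfold R_dist in HN.
  assert (H1 := picard_cauchy_bound n tau phi F L B T Hn Htau HL HB HF HFB HT k p t i ltac:(unfold p; lia) Ht Hi).
  assert (Sx p (2 * INR n * L * T) <= exp (2 * INR n * L * T)) by (apply Sx_le_exp; auto).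
  assert (INR n * B / (2 * INR n * L) * (Sx p (2 * INR n * L * T) - Sx k (2 * INR n * L * T)) <=
          INR n * B / (2 * INR n * L) * (exp (2 * INR n * L * T) - Sx k (2 * INR n * L * T)))
    by (apply Rmult_le_compat_l; lra).
  replace (Xlim tau phi F t i - picard tau phi F k t i) with
    ((picard tau phi F p t i - picard tau phi F k t i) - (picard tau phi F p t i - Xlim tau phi F t i)) by ring.
  eapply Rle_trans; [apply Rabs_triang|]. rewrite Rabs_Ropp. lra.
Qed.

Lemma Xlim_neg tau phi F t i : t <= 0 -> Xlim tau phi F t i = phi i.
Proof.
  intros Ht. unfold Xlim. rewrite (Lim_seq_ext _ (fun _ => phi i)).
  - rewrite Lim_seq_const. reflexivity.
  - intros k; apply picard_neg; auto.
Qed.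

Lemma Xlim_lip n tau phi F L B :
  (0 < n)%nat -> 0 <= tau -> 0 < L -> 0 <= B -> FLip n F L -> FBnd n F B ->
  forall j t s, (j < n)%nat -> Rabs (Xlim tau phi F t j - Xlim tau phi F s j) <= B * Rabs (t - s).
Proof.
  intros Hn Htau HL HB HF HFB j t s Hj.
  apply Rle_plus_epsilon. intros eta He.
  assert (Ht := Xlim_conv n tau phi F L B Hn Htau HL HB HF HFB t j Hj).
  assert (Hs := Xlim_conv n tau phi F L B Hn Htau HL HB HF HFB s j Hj).
  apply is_lim_seq_Reals in Ht, Hs.
  destruct (Ht (eta/2) ltac:(lra)) as [N1 H1]. destruct (Hs (eta/2) ltac:(lra)) as [N2 H2].
  specialize (H1 (Nat.max N1 N2) ltac:(lia)). specialize (H2 (Nat.max N1 N2) ltac:(lia)).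
  unfold R_dist in H1, H2.
  assert (H3 := picard_lip n tau phi F L B (Rlt_le _ _ HL) HB HF HFB (Nat.max N1 N2) j t s Hj).
  set (k := Nat.max N1 N2) in *.
  replace (Xlim tau phi F t j - Xlim tau phi F s j) with
    ((picard tau phi F k t j - picard tau phi F k s j) - (picard tau phi F k t j - Xlim tau phi F t j)
      + (picard tau phi F k s j - Xlim tau phi F s j)) by ring.
  eapply Rle_trans; [apply Rabs_triang|].
  eapply Rle_trans; [apply Rplus_le_compat_r, Rabs_triang|]. rewrite Rabs_Ropp. lra.
Qed.

Lemma Xlim_integral n tau phi F L B :
  (0 < n)%nat -> 0 <= tau -> 0 < L -> 0 <= B -> FLip n F L -> FBnd n F B ->
  forall t i, 0 <= t -> (i < n)%nat ->
    Xlim tau phi F t i = phi i + RInt (fun s => F i (Xlim tau phi F s) (Xlim tau phi F (s - tau))) 0 t.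
Proof.
  intros Hn Htau HL HB HF HFB t i Ht Hi.
  set (gl := fun s => F i (Xlim tau phi F s) (Xlim tau phi F (s - tau))).
  set (K := 2 * INR n * L).
  assert (HnR : 0 < INR n) by (apply lt_0_INR; auto).
  assert (HK : 0 < K) by (unfold K; nra).
  set (e := fun k => INR n * B / K * (exp (K * t) - Sx k (K * t))).
  assert (Hr : 0 <= K * t) by nra.
  assert (He0 : forall k, 0 <= e k).
  { intros k. unfold e. apply Rmult_le_pos; [apply Rdiv_le_0_compat; nra|].
    generalize (Sx_le_exp (K * t) k Hr); lra. }
  assert (HeS : forall k, e (S k) <= e k).
  { intros k. unfold e. apply Rmult_le_compat_l; [apply Rdiv_le_0_compat; nra|].
    generalize (Sx_mono (K * t) k (S k) Hr ltac:(lia)); lra. }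
  assert (HXl := Xlim_lip n tau phi F L B Hn Htau HL HB HF HFB).
  assert (HKg : 0 <= 2 * INR n * B * L) by (repeat apply Rmult_le_pos; lra).
  assert (Hgl : forall y x, Rabs (gl y - gl x) <= 2 * INR n * B * L * Rabs (y - x)).
  { intros. unfold gl. apply (integrand_lip n F L tau (Xlim tau phi F) B i); auto; lra. }
  assert (Hbound : forall k, Rabs (Xlim tau phi F t i - (phi i + RInt gl 0 t)) <= (1 + K * t) * e k).
  { intros k.
    set (gk := fun s => F i (picard tau phi F k s) (picard tau phi F k (s - tau))).
    assert (Hgk : forall y x, Rabs (gk y - gk x) <= 2 * INR n * B * L * Rabs (y - x)).
    { intros. unfold gk. apply (integrand_lip n F L tau (picard tau phi F k) B i); auto; try lra.
      apply picard_lip with L; auto; lra. }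
    assert (Hck : forall x, continuous gk x) by (intros x; apply lip_cont with (2 * INR n * B * L); auto).
    assert (Hcl : forall x, continuous gl x) by (intros x; apply lip_cont with (2 * INR n * B * L); auto).
    assert (H1 : Rabs (Xlim tau phi F t i - picard tau phi F (S k) t i) <= e (S k)).
    { apply (Xlim_bound n tau phi F L B t); auto; lra. }
    assert (H2 : Rabs (picard tau phi F (S k) t i - (phi i + RInt gl 0 t)) <= (K * e k) * Rabs (t - 0)).
    { rewrite picard_S. rewrite Rmax_left by lra. fold gk.
      replace (phi i + RInt gk 0 t - (phi i + RInt gl 0 t)) with (RInt gk 0 t - RInt gl 0 t) by ring.
      rewrite <- RInt_minus_R by (apply cont_ex_RInt; auto).
      apply RInt_bound.
      - intros x. apply lip_cont with (2 * (2 * INR n * B * L)); [lra|].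
        intros y. specialize (Hgk y x). specialize (Hgl y x).
        replace (gk y - gl y - (gk x - gl x)) with ((gk y - gk x) - (gl y - gl x)) by ring.
        eapply Rle_trans; [apply Rabs_triang|]. rewrite Rabs_Ropp. lra.
      - intros x Hx. rewrite Rmin_left, Rmax_right in Hx by lra. unfold gk, gl.
        eapply Rle_trans; [apply HF; auto|].
        assert (nrm n (picard tau phi F k x) (Xlim tau phi F x) <= INR n * e k).
        { apply nrm_le. intros j Hj. rewrite Rabs_minus_sym.
          apply (Xlim_bound n tau phi F L B t); auto; lra. }
        assert (nrm n (picard tau phi F k (x - tau)) (Xlim tau phi F (x - tau)) <= INR n * e k).
        { apply nrm_le. intros j Hj. rewrite Rabs_minus_sym.
          apply (Xlim_bound n tau phi F L B t); auto; lra. }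
        unfold K. replace (2 * INR n * L * e k) with (L * (INR n * e k + INR n * e k)) by ring.
        apply Rmult_le_compat_l; lra. }
    rewrite Rminus_0_r, (Rabs_right t) in H2 by lra.
    replace (Xlim tau phi F t i - (phi i + RInt gl 0 t)) with
      ((Xlim tau phi F t i - picard tau phi F (S k) t i) + (picard tau phi F (S k) t i - (phi i + RInt gl 0 t))) by ring.
    eapply Rle_trans; [apply Rabs_triang|]. specialize (HeS k). nra. }
  apply Rminus_diag_uniq. apply Rabs_eq_0. apply Rle_antisym; [|apply Rabs_pos].
  apply Rle_plus_epsilon. intros eta Heta. rewrite Rplus_0_l.
  destruct (epsk_small n B K (K * t) (eta / (1 + K * t))) as [N HN].
  { apply Rdiv_lt_0_compat; lra. }
  specialize (HN N (le_n N)). fold (e N) in HN. rewrite Rabs_right in HN by (apply Rle_ge, He0).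
  eapply Rle_trans; [apply (Hbound N)|].
  apply Rmult_lt_compat_l with (r := 1 + K * t) in HN; [|lra].
  replace ((1 + K * t) * (eta / (1 + K * t))) with eta in HN by (field; lra). lra.
Qed.

Theorem dde_exists n tau phi F L B :
  (0 < n)%nat -> 0 <= tau -> 0 < L -> 0 <= B -> FLip n F L -> FBnd n F B ->
  exists X : R -> nat -> R,
    (forall t i, t <= 0 -> X t i = phi i) /\
    (forall j t s, (j < n)%nat -> Rabs (X t j - X s j) <= B * Rabs (t - s)) /\
    (forall i t, (i < n)%nat -> 0 < t -> derivable_pt_lim (fun s => X s i) t (F i (X t) (X (t - tau)))).
Proof.
  intros Hn Htau HL HB HF HFB. exists (Xlim tau phi F). split; [|split].
  - intros; apply Xlim_neg; auto.
  - apply (Xlim_lip n tau phi F L B); auto.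
  - intros i t Hi Ht.
    set (gl := fun s => F i (Xlim tau phi F s) (Xlim tau phi F (s - tau))).
    assert (HXl := Xlim_lip n tau phi F L B Hn Htau HL HB HF HFB).
    assert (HKg : 0 <= 2 * INR n * B * L) by (generalize (pos_INR n); intros; repeat apply Rmult_le_pos; lra).
    assert (Hgl : forall y x, Rabs (gl y - gl x) <= 2 * INR n * B * L * Rabs (y - x)).
    { intros. unfold gl. apply (integrand_lip n F L tau (Xlim tau phi F) B i); auto; lra. }
    assert (Hcl : forall x, continuous gl x) by (intros x; apply lip_cont with (2 * INR n * B * L); auto).
    assert (Hd : is_derive (fun b => RInt gl 0 b) t (gl t)).
    { apply (is_derive_RInt gl (fun b => RInt gl 0 b) 0 t); auto.
      exists (mkposreal 1 Rlt_0_1). intros y _. apply (RInt_correct (V:=R_CompleteNormedModule)). apply cont_ex_RInt; auto. }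
    apply is_derive_Reals in Hd.
    assert (Hd2 : derivable_pt_lim (fun b => phi i + RInt gl 0 b) t (gl t)).
    { replace (gl t) with (0 + gl t) by ring.
      apply (derivable_pt_lim_plus (fun _ => phi i) (fun b => RInt gl 0 b)); auto.
      apply derivable_pt_lim_const. }
    apply is_derive_Reals. apply is_derive_Reals in Hd2.
    apply (is_derive_ext_loc (fun b => phi i + RInt gl 0 b)); auto.
    assert (Ht2 : 0 < t / 2) by lra.
    exists (mkposreal (t/2) Ht2). intros y Hy.
    change (Rabs (y - t) < t / 2) in Hy. apply Rabs_def2 in Hy.
    symmetry. apply (Xlim_integral n tau phi F L B); auto; lra.
Qed.

Lemma cont_from_iff f a : cont_from f a <-> forall x, a <= x -> limit1_in f (fun y => a <= y) (f x) x.
Proof.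
  split.
  - intros H x Hx eps He. destruct (H x Hx eps He) as [d [Hd Hd2]].
    exists d; split; [lra|]. intros y [Hy1 Hy2]. simpl in *. unfold R_dist in *. apply Hd2; auto.
  - intros H x Hx eps He. destruct (H x Hx eps He) as [d [Hd Hd2]].
    exists d; split; [lra|]. intros y Hy1 Hy2. apply (Hd2 y); simpl; unfold R_dist; auto.
Qed.

Lemma cont_from_plus f g a : cont_from f a -> cont_from g a -> cont_from (fun x => f x + g x) a.
Proof. rewrite !cont_from_iff. intros. apply limit_plus; auto. Qed.
Lemma cont_from_minus f g a : cont_from f a -> cont_from g a -> cont_from (fun x => f x - g x) a.
Proof. rewrite !cont_from_iff. intros. apply limit_minus; auto. Qed.
Lemma cont_from_mult f g a : cont_from f a -> cont_from g a -> cont_from (fun x => f x * g x) a.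
Proof. rewrite !cont_from_iff. intros. apply limit_mul; auto. Qed.
Lemma cont_from_const c a : cont_from (fun _ => c) a.
Proof. intros x _ eps He. exists 1; split; [lra|]. intros. rewrite Rminus_diag, Rabs_R0; lra. Qed.
Lemma cont_from_scal c f a : cont_from f a -> cont_from (fun x => c * f x) a.
Proof. intros. apply cont_from_mult; auto. apply cont_from_const. Qed.
Lemma cont_from_mono f a b : cont_from f a -> a <= b -> cont_from f b.
Proof.
  intros H Hab x Hx eps He. destruct (H x ltac:(lra) eps He) as [d [Hd Hd2]].
  exists d; split; auto. intros y Hy Hy2. apply Hd2; auto; lra.
Qed.
Lemma cont_from_cont g a : (forall x, continuity_pt g x) -> cont_from g a.
Proof.
  intros H x _ eps He. destruct (H x eps He) as [d [Hd Hd2]].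
  exists d; split; [lra|]. intros y _ Hy. destruct (Req_dec y x) as [->|Hne].
  - rewrite Rminus_diag, Rabs_R0; lra.
  - apply (Hd2 y). split; [split; [exact I|auto]|]. simpl; unfold R_dist; auto.
Qed.

Lemma dpl_plus f g x a b : derivable_pt_lim f x a -> derivable_pt_lim g x b ->
  derivable_pt_lim (fun t => f t + g t) x (a + b).
Proof. intros. apply (derivable_pt_lim_plus f g); auto. Qed.
Lemma dpl_minus f g x a b : derivable_pt_lim f x a -> derivable_pt_lim g x b ->
  derivable_pt_lim (fun t => f t - g t) x (a - b).
Proof. intros. apply (derivable_pt_lim_minus f g); auto. Qed.
Lemma dpl_mult f g x a b : derivable_pt_lim f x a -> derivable_pt_lim g x b ->
  derivable_pt_lim (fun t => f t * g t) x (a * g x + f x * b).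
Proof. intros. apply (derivable_pt_lim_mult f g); auto. Qed.
Lemma dpl_const c x : derivable_pt_lim (fun _ => c) x 0.
Proof. apply derivable_pt_lim_const. Qed.
Lemma dpl_id x : derivable_pt_lim (fun t => t) x 1.
Proof. apply derivable_pt_lim_id. Qed.
Lemma dpl_eq f x a b : derivable_pt_lim f x a -> a = b -> derivable_pt_lim f x b.
Proof. intros H ->; auto. Qed.
Lemma dpl_scal c f x a : derivable_pt_lim f x a -> derivable_pt_lim (fun t => c * f t) x (c * a).
Proof. intros H. apply dpl_eq with (0 * f x + c * a); [apply dpl_mult; [apply dpl_const|exact H]|ring]. Qed.
Lemma dexp k x : derivable_pt_lim (fun t => exp (k * t)) x (k * exp (k * x)).
Proof.
  assert (H := derivable_pt_lim_comp (fun t => k * t) exp x k (exp (k * x))).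
  unfold comp in H. eapply dpl_eq; [apply H|ring].
  - eapply dpl_eq; [apply dpl_scal, dpl_id|ring].
  - apply derivable_pt_lim_exp.
Qed.
Lemma cexp k a : cont_from (fun t => exp (k * t)) a.
Proof.
  apply cont_from_cont. intros x. apply derivable_continuous_pt.
  exists (k * exp (k * x)). apply dexp.
Qed.

Lemma barrier1 (h dh : R -> R) :
  cont_from h 0 -> (forall t, 0 < t -> derivable_pt_lim h t (dh t)) -> 0 < h 0 ->
  (forall t, 0 < t -> (forall s, 0 <= s <= t -> 0 <= h s) -> h t = 0 -> 0 < dh t) ->
  forall t, 0 <= t -> 0 < h t.
Proof.
  intros Hc Hd H0 Hb t Ht.
  apply (barrier 1 (fun _ => h) (fun _ => dh) ltac:(auto) ltac:(auto) ltac:(auto)) with (i := 0%nat); auto.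
  intros i s _ Hs Hall. apply Hb; auto. intros; apply (Hall 0%nat); auto.
Qed.

Lemma abs_small_zero x : (forall eps, 0 < eps -> Rabs x <= eps) -> x = 0.
Proof.
  intros H. destruct (Req_dec x 0) as [|Hne]; auto.
  assert (Hp : 0 < Rabs x) by (apply Rabs_pos_lt; auto).
  specialize (H (Rabs x / 2) ltac:(lra)). lra.
Qed.

Lemma N_explicit (bv muv : R) (N : R -> R) :
  0 < muv -> cont_from N 0 -> (forall t, 0 < t -> derivable_pt_lim N t (bv - muv * N t)) ->
  forall t, 0 <= t -> N t = bv / muv + (N 0 - bv / muv) * exp (- muv * t).
Proof.
  intros Hmu Hc Hd t Ht.
  set (V := bv / muv).
  set (g := fun s => (N s - V) * exp (muv * s) - (N 0 - V)).
  assert (Hg0 : g 0 = 0) by (unfold g; rewrite Rmult_0_r, exp_0; ring).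
  assert (Hgc : cont_from g 0).
  { unfold g. apply cont_from_minus; [|apply cont_from_const].
    apply cont_from_mult; [apply cont_from_minus; auto; apply cont_from_const|apply cexp]. }
  assert (Hgd : forall s, 0 < s -> derivable_pt_lim g s 0).
  { intros s Hs. unfold g. eapply dpl_eq.
    - apply dpl_minus; [apply dpl_mult; [apply dpl_minus; [apply Hd; auto|apply dpl_const]|apply dexp]|apply dpl_const].
    - unfold V. field. lra. }
  assert (Hz : g t = 0).
  { apply abs_small_zero. intros eps He.
    assert (H1 := barrier1 (fun s => eps / (1 + t) * (1 + s) - g s) (fun _ => eps / (1 + t) - 0)).
    assert (H2 := barrier1 (fun s => eps / (1 + t) * (1 + s) + g s) (fun _ => eps / (1 + t) + 0)).
    assert (Hp : 0 < eps / (1 + t)) by (apply Rdiv_lt_0_compat; lra).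
    assert (Hcc : cont_from (fun s => eps / (1 + t) * (1 + s)) 0).
    { apply cont_from_scal, cont_from_plus; [apply cont_from_const|].
      apply cont_from_cont. intros; apply derivable_continuous_pt, derivable_id. }
    assert (Hdd : forall s, derivable_pt_lim (fun s => eps / (1 + t) * (1 + s)) s (eps / (1 + t))).
    { intros s. eapply dpl_eq; [apply dpl_scal, dpl_plus; [apply dpl_const|apply dpl_id]|ring]. }
    specialize (H1 ltac:(apply cont_from_minus; auto)).
    specialize (H1 ltac:(intros; apply dpl_minus; auto)).
    specialize (H1 ltac:(cbv beta; rewrite Hg0; lra) ltac:(intros; lra) t Ht).
    specialize (H2 ltac:(apply cont_from_plus; auto)).
    specialize (H2 ltac:(intros; apply dpl_plus; auto)).
    specialize (H2 ltac:(cbv beta; rewrite Hg0; lra) ltac:(intros; lra) t Ht).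
    cbv beta in H1, H2. replace (eps / (1 + t) * (1 + t)) with eps in H1, H2 by (field; lra).
    apply Rabs_le; lra. }
  unfold g in Hz.
  assert (HN : N t - V = (N 0 - V) * exp (- muv * t)).
  { assert (He : exp (muv * t) * exp (- muv * t) = 1).
    { rewrite <- exp_plus. replace (muv * t + - muv * t) with 0 by ring. apply exp_0. }
    replace (N t - V) with ((N t - V) * exp (muv * t) * exp (- muv * t)) by (rewrite Rmult_assoc, He; ring).
    f_equal. lra. }
  lra.
Qed.

Lemma ratio_bound a b n X Y D :
  Rabs a <= X -> Rabs b <= Y -> 0 < D -> D <= n -> Rabs (a / n * b) <= X * Y / D.
Proof.
  intros Ha Hb HD Hn.
  unfold Rdiv. rewrite !Rabs_mult, Rabs_inv, (Rabs_right n) by lra.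
  assert (0 <= X) by (generalize (Rabs_pos a); lra).
  assert (0 <= Y) by (generalize (Rabs_pos b); lra).
  assert (/ n <= / D) by (apply Rinv_le_contravar; lra).
  assert (0 < / n) by (apply Rinv_0_lt_compat; lra).
  apply Rle_trans with (X * / n * Y).
  - apply Rmult_le_compat; try apply Rmult_le_pos; try apply Rabs_pos; try lra.
    apply Rmult_le_compat_r; lra.
  - replace (X * Y * / D) with (X * / D * Y) by ring.
    apply Rmult_le_compat_r; auto. apply Rmult_le_compat_l; auto.
Qed.

Lemma sol_parts bh bv muh muv Cvh Chv tau p1 p2 p3 p4 x1 x2 x3 x4 :
  0 <= tau -> is_solution bh bv muh muv Cvh Chv tau p1 p2 p3 p4 x1 x2 x3 x4 ->
  cont_from x1 0 /\ cont_from x2 0 /\ cont_from x3 0 /\ cont_from x4 0.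
Proof.
  intros Ht (H1 & H2 & H3 & H4 & _). repeat split; eapply cont_from_mono; eauto; lra.
Qed.

Lemma sol_N bh bv muh muv Cvh Chv tau p1 p2 p3 p4 x1 x2 x3 x4 :
  0 <= tau -> 0 < muv -> is_solution bh bv muh muv Cvh Chv tau p1 p2 p3 p4 x1 x2 x3 x4 ->
  forall t, 0 <= t -> x3 t + x4 t = bv / muv + (x3 0 + x4 0 - bv / muv) * exp (- muv * t).
Proof.
  intros Htau Hmu Hs. destruct (sol_parts _ _ _ _ _ _ _ _ _ _ _ _ _ _ _ Htau Hs) as (C1 & C2 & C3 & C4).
  destruct Hs as (_ & _ & _ & _ & _ & Hd).
  apply (N_explicit bv muv (fun t => x3 t + x4 t)); auto.
  - apply cont_from_plus; auto.
  - intros t Ht. destruct (Hd t Ht) as (_ & _ & D3 & D4).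
    eapply dpl_eq; [apply dpl_plus; [apply D3|apply D4]|]. ring.
Qed.

Lemma exp_le1 x : x <= 0 -> exp x <= 1.
Proof. intros. rewrite <- exp_0. destruct (Req_dec x 0); [subst; lra|]. left; apply exp_increasing; lra. Qed.
Lemma exp_ge1 x : 0 <= x -> 1 <= exp x.
Proof. intros. rewrite <- exp_0. destruct (Req_dec x 0); [subst; lra|]. left; apply exp_increasing; lra. Qed.

Lemma abs_le_split x a : Rabs x <= a -> - a <= x <= a.
Proof. intros H. generalize (Rle_abs x) (Rle_abs (- x)). rewrite Rabs_Ropp. lra. Qed.

Lemma mul_abs_bound k q : 0 <= k -> - (k * Rabs q) <= k * q <= k * Rabs q.
Proof.
  intros Hk. assert (H := abs_le_split q (Rabs q) (Rle_refl _)).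
  split; [replace (- (k * Rabs q)) with (k * (- Rabs q)) by ring|]; apply Rmult_le_compat_l; lra.
Qed.

Lemma stab_core bh bv muh muv Cvh Chv tau (lam c A m0 d : R) p1 p2 p3 p4 x1 x2 x3 x4 :
  0 < bh -> 0 < bv -> 0 < muh -> 0 < muv -> 0 < Cvh -> 0 < Chv -> 0 <= tau ->
  0 < lam -> 0 < c -> 0 < A -> 0 < m0 -> 0 < d ->
  d <= A -> d <= m0 -> c * d <= m0 -> 4 * d < bv / muv ->
  Cvh * exp (lam * tau) * (bh / muh + A) < c * (bv / muv - 2 * d) * (muh - lam) ->
  Chv * (c * (bv / muv + 2 * d) + m0) < muv - lam ->
  Cvh * m0 * (bh / muh + A) < c * (bv / muv - 2 * d) * (muh - lam) * A ->
  phi_near tau p1 p2 p3 p4 (bh / muh) 0 (bv / muv) 0 d ->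
  is_solution bh bv muh muv Cvh Chv tau p1 p2 p3 p4 x1 x2 x3 x4 ->
  forall t, 0 <= t ->
    Rabs (x1 t - bh / muh) < A * exp (- lam * t) /\ Rabs (x2 t) < m0 * exp (- lam * t) /\
    c * Rabs (x4 t) < m0 * exp (- lam * t).
Proof.
  intros Hbh Hbv Hmuh Hmuv HCvh HChv Htau Hlam Hc HA Hm0 Hd Hd1 Hd2 Hd3 Hd4 K1 K2 K3 Hnear Hsol.
  set (H := bh / muh) in *. set (V := bv / muv) in *.
  assert (HH : 0 < H) by (unfold H; apply Rdiv_lt_0_compat; lra).
  assert (HV : 0 < V) by (unfold V; apply Rdiv_lt_0_compat; lra).
  assert (Hbh' : bh = muh * H) by (unfold H; field; lra).
  assert (Hbv' : bv = muv * V) by (unfold V; field; lra).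
  destruct (sol_parts _ _ _ _ _ _ _ _ _ _ _ _ _ _ _ Htau Hsol) as (C1 & C2 & C3 & C4).
  assert (HN := sol_N _ _ _ _ _ _ _ _ _ _ _ _ _ _ _ Htau Hmuv Hsol). fold V in HN.
  destruct Hsol as (_ & _ & _ & _ & Hinit & Hder).
  assert (Hp0 := Hnear 0 ltac:(lra)).
  destruct (Hinit 0 ltac:(lra)) as (E1 & E2 & E3 & E4).
  assert (HNb : forall t, 0 <= t -> Rabs (x3 t + x4 t - V) <= 2 * d).
  { intros t Ht. rewrite HN by auto.
    replace (V + (x3 0 + x4 0 - V) * exp (- muv * t) - V) with ((x3 0 + x4 0 - V) * exp (- muv * t)) by ring.
    rewrite Rabs_mult, (Rabs_right (exp _)) by (left; apply exp_pos).
    assert (exp (- muv * t) <= 1) by (apply exp_le1; nra).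
    assert (Rabs (x3 0 + x4 0 - V) <= 2 * d).
    { rewrite E3, E4. destruct Hp0 as (_ & _ & Q3 & Q4). rewrite Rminus_0_r in Q4.
      replace (p3 0 + p4 0 - V) with ((p3 0 - V) + p4 0) by ring.
      eapply Rle_trans; [apply Rabs_triang|]. lra. }
    generalize (Rabs_pos (x3 0 + x4 0 - V)) (exp_pos (- muv * t)). nra. }
  set (E := fun t => exp (- lam * t)).
  set (f1 := fun t => bh - Cvh * (x4 t / (x3 t + x4 t)) * x1 t - muh * x1 t).
  set (f2 := fun t => Cvh * (x4 (t - tau) / (x3 (t - tau) + x4 (t - tau))) * x1 (t - tau) - muh * x2 t).
  set (f4 := fun t => Chv * x2 t * x3 t - muv * x4 t).
  set (h := fun i t => match i with
            | 0%nat => A * E t - (x1 t - H)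
            | 1%nat => A * E t + (x1 t - H)
            | 2%nat => m0 * E t - x2 t
            | 3%nat => m0 * E t + x2 t
            | 4%nat => m0 * E t - c * x4 t
            | _ => m0 * E t + c * x4 t end).
  set (dh := fun i t => match i with
            | 0%nat => A * (- lam * E t) - (f1 t - 0)
            | 1%nat => A * (- lam * E t) + (f1 t - 0)
            | 2%nat => m0 * (- lam * E t) - f2 t
            | 3%nat => m0 * (- lam * E t) + f2 t
            | 4%nat => m0 * (- lam * E t) - c * f4 t
            | _ => m0 * (- lam * E t) + c * f4 t end).
  assert (HcE : cont_from E 0) by apply cexp.
  assert (HdE : forall t, derivable_pt_lim E t (- lam * E t)) by (intros; apply dexp).
  assert (Hbar := barrier 6 h dh).
  assert (HEt : forall t, 0 < E t) by (intros; apply exp_pos).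
  assert (HE1 : forall t, 0 <= t -> E t <= 1) by (intros; apply exp_le1; nra).
  specialize (Hbar ltac:(intros i Hi; do 6 (destruct i as [|i]; [simpl;
     first [apply cont_from_minus | apply cont_from_plus];
     [apply cont_from_scal; auto
     |first [apply cont_from_scal; auto| apply cont_from_minus; auto; apply cont_from_const | auto]]|]); lia)).
  specialize (Hbar ltac:(intros i t Hi Ht; destruct (Hder t Ht) as (D1 & D2 & D3 & D4);
     do 6 (destruct i as [|i]; [simpl;
     first [apply dpl_minus | apply dpl_plus];
     [apply dpl_scal; auto
     |first [apply dpl_scal; auto| apply dpl_minus; auto; apply dpl_const | auto]]|]); lia)).
  assert (HE0 : E 0 = 1) by (unfold E; rewrite Rmult_0_r; apply exp_0).
  specialize (Hbar ltac:(intros i Hi;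
     destruct Hp0 as (Q1 & Q2 & Q3 & Q4); rewrite Rminus_0_r in Q2, Q4;
     apply Rabs_def2 in Q1; apply Rabs_def2 in Q2; apply Rabs_def2 in Q4;
     do 6 (destruct i as [|i]; [unfold h; cbv beta iota; rewrite ?E1, ?E2, ?E4, HE0; nra|]); lia)).
  assert (HEs : forall t, E (t - tau) = E t * exp (lam * tau)).
  { intros t. unfold E. rewrite <- exp_plus. f_equal. ring. }
  assert (Htouch : forall i t, (i < 6)%nat -> 0 < t ->
            (forall j s, (j < 6)%nat -> 0 <= s <= t -> 0 <= h j s) -> h i t = 0 -> 0 < dh i t).
  { intros i t Hi Ht Hall Hz.
    assert (Bs : forall s, 0 <= s <= t -> Rabs (x1 s - H) <= A * E s /\ Rabs (x2 s) <= m0 * E s /\ c * Rabs (x4 s) <= m0 * E s).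
    { intros s Hs.
      assert (G0 := Hall 0%nat s ltac:(lia) Hs). assert (G1 := Hall 1%nat s ltac:(lia) Hs).
      assert (G2 := Hall 2%nat s ltac:(lia) Hs). assert (G3 := Hall 3%nat s ltac:(lia) Hs).
      assert (G4 := Hall 4%nat s ltac:(lia) Hs). assert (G5 := Hall 5%nat s ltac:(lia) Hs).
      unfold h in G0, G1, G2, G3, G4, G5. cbv beta iota in G0, G1, G2, G3, G4, G5.
      split; [apply Rabs_le; lra|]. split; [apply Rabs_le; lra|].
      rewrite <- (Rabs_right c) by lra. rewrite <- Rabs_mult. apply Rabs_le; lra. }
    destruct (Bs t ltac:(lra)) as (B1 & B2 & B4).
    assert (HEt1 := HE1 t ltac:(lra)). assert (HEtp := HEt t).
    assert (Bx1 : Rabs (x1 t) <= H + A).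
    { replace (x1 t) with ((x1 t - H) + H) by ring. eapply Rle_trans; [apply Rabs_triang|].
      rewrite (Rabs_right H) by lra. nra. }
    assert (Bx4 : Rabs (x4 t) <= m0 * E t / c).
    { apply Rmult_le_reg_l with c; auto. replace (c * (m0 * E t / c)) with (m0 * E t) by (field; lra). auto. }
    assert (BN := abs_le_split _ _ (HNb t ltac:(lra))).
    assert (Bx3 : c * Rabs (x3 t) <= c * (V + 2 * d) + m0).
    { replace (x3 t) with ((x3 t + x4 t - V) + V - x4 t) by ring.
      assert (Rabs (x3 t + x4 t - V + V - x4 t) <= V + 2 * d + Rabs (x4 t)).
      { eapply Rle_trans; [apply Rabs_triang|]. rewrite Rabs_Ropp.
        eapply Rle_trans; [apply Rplus_le_compat_r, Rabs_triang|]. rewrite (Rabs_right V) by lra.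
        assert (Rabs (x3 t + x4 t - V) <= 2 * d) by (apply Rabs_le; lra). lra. }
      assert (c * Rabs (x4 t) <= m0) by nra. nra. }
    assert (Bd : Rabs (x1 (t - tau)) <= H + A /\ c * Rabs (x4 (t - tau)) <= m0 * E t * exp (lam * tau) /\ V - 2 * d <= x3 (t - tau) + x4 (t - tau)).
    { destruct (Rle_or_lt 0 (t - tau)) as [Hst|Hst].
      - destruct (Bs (t - tau) ltac:(lra)) as (B1' & _ & B4').
        rewrite HEs in B1', B4'. assert (HE1' := HE1 (t - tau) Hst). rewrite HEs in HE1'.
        split; [|split].
        + replace (x1 (t - tau)) with ((x1 (t - tau) - H) + H) by ring. eapply Rle_trans; [apply Rabs_triang|].
          rewrite (Rabs_right H) by lra. nra.
        + lra.
        + assert (Q := abs_le_split _ _ (HNb (t - tau) Hst)). lra.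
      - destruct (Hinit (t - tau) ltac:(lra)) as (I1 & _ & I3 & I4).
        destruct (Hnear (t - tau) ltac:(lra)) as (Q1 & _ & Q3 & Q4).
        rewrite Rminus_0_r in Q4. rewrite I1, I3, I4.
        assert (Hge : 1 <= E t * exp (lam * tau)).
        { unfold E. rewrite <- exp_plus. apply exp_ge1. nra. }
        split; [|split].
        + replace (p1 (t - tau)) with ((p1 (t - tau) - H) + H) by ring. eapply Rle_trans; [apply Rabs_triang|].
          rewrite (Rabs_right H) by lra. lra.
        + assert (c * Rabs (p4 (t - tau)) <= c * d) by (apply Rmult_le_compat_l; lra). nra.
        + apply Rabs_def2 in Q3. apply Rabs_def2 in Q4. lra. }
    destruct Bd as (Bd1 & Bd4 & BdN).
    assert (HVd : 0 < V - 2 * d) by lra.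
    assert (HNt : x3 t + x4 t <> 0) by lra.
    assert (HNs : x3 (t - tau) + x4 (t - tau) <> 0) by lra.
    set (Q := x4 t / (x3 t + x4 t) * x1 t).
    set (Qd := x4 (t - tau) / (x3 (t - tau) + x4 (t - tau)) * x1 (t - tau)).
    assert (BQ : Rabs Q <= m0 * E t / c * (H + A) / (V - 2 * d)).
    { apply ratio_bound; auto; lra. }
    assert (BQd : Rabs Qd <= m0 * E t * exp (lam * tau) / c * (H + A) / (V - 2 * d)).
    { apply ratio_bound; auto; try lra.
      apply Rmult_le_reg_l with c; auto. replace (c * (m0 * E t * exp (lam * tau) / c)) with (m0 * E t * exp (lam * tau)) by (field; lra). auto. }
    assert (KQ : Cvh * (m0 * E t / c * (H + A) / (V - 2 * d)) < (muh - lam) * A * E t).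
    { replace (Cvh * (m0 * E t / c * (H + A) / (V - 2 * d))) with ((Cvh * m0 * (H + A)) * (E t / (c * (V - 2 * d)))) by (field; lra).
      replace ((muh - lam) * A * E t) with ((c * (V - 2 * d) * (muh - lam) * A) * (E t / (c * (V - 2 * d)))) by (field; lra).
      apply Rmult_lt_compat_r; auto. apply Rdiv_lt_0_compat; nra. }
    assert (KQd : Cvh * (m0 * E t * exp (lam * tau) / c * (H + A) / (V - 2 * d)) < (muh - lam) * m0 * E t).
    { replace (Cvh * (m0 * E t * exp (lam * tau) / c * (H + A) / (V - 2 * d))) with ((Cvh * exp (lam * tau) * (H + A)) * (m0 * E t / (c * (V - 2 * d)))) by (field; lra).
      replace ((muh - lam) * m0 * E t) with ((c * (V - 2 * d) * (muh - lam)) * (m0 * E t / (c * (V - 2 * d)))) by (field; lra).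
      apply Rmult_lt_compat_r; auto. apply Rdiv_lt_0_compat; nra. }
    assert (CQ : Cvh * Rabs Q <= Cvh * (m0 * E t / c * (H + A) / (V - 2 * d))) by (apply Rmult_le_compat_l; lra).
    assert (CQd : Cvh * Rabs Qd <= Cvh * (m0 * E t * exp (lam * tau) / c * (H + A) / (V - 2 * d))) by (apply Rmult_le_compat_l; lra).
    assert (AQ := mul_abs_bound Cvh Q ltac:(lra)).
    assert (AQd := mul_abs_bound Cvh Qd ltac:(lra)).
    set (P := x2 t * x3 t).
    assert (BP : c * Rabs P <= m0 * E t * (c * (V + 2 * d) + m0)).
    { unfold P. rewrite Rabs_mult. replace (c * (Rabs (x2 t) * Rabs (x3 t))) with (Rabs (x2 t) * (c * Rabs (x3 t))) by ring.
      apply Rmult_le_compat; auto; try apply Rabs_pos. apply Rmult_le_pos; [lra|apply Rabs_pos]. }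
    assert (KP : Chv * (m0 * E t * (c * (V + 2 * d) + m0)) < (muv - lam) * m0 * E t).
    { replace (Chv * (m0 * E t * (c * (V + 2 * d) + m0))) with ((Chv * (c * (V + 2 * d) + m0)) * (m0 * E t)) by ring.
      replace ((muv - lam) * m0 * E t) with ((muv - lam) * (m0 * E t)) by ring.
      apply Rmult_lt_compat_r; auto. nra. }
    assert (CP : Chv * (c * Rabs P) <= Chv * (m0 * E t * (c * (V + 2 * d) + m0))) by (apply Rmult_le_compat_l; lra).
    assert (AP := mul_abs_bound (Chv * c) P ltac:(nra)).
    replace (Chv * c * Rabs P) with (Chv * (c * Rabs P)) in AP by ring.
    replace (Chv * c * P) with (Chv * (c * P)) in AP by ring.
    destruct i as [|[|[|[|[|[|i]]]]]]; [| | | | | |lia]; unfold h in Hz; unfold dh; cbv beta iota in *.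
    - assert (Hx : x1 t = H + A * E t) by lra.
      replace (A * (- lam * E t) - (f1 t - 0)) with ((muh - lam) * A * E t + Cvh * Q).
      2:{ unfold f1, Q. rewrite Hbh', Hx. field. auto. } lra.
    - assert (Hx : x1 t = H - A * E t) by lra.
      replace (A * (- lam * E t) + (f1 t - 0)) with ((muh - lam) * A * E t - Cvh * Q).
      2:{ unfold f1, Q. rewrite Hbh', Hx. field. auto. } lra.
    - assert (Hx : x2 t = m0 * E t) by lra.
      replace (m0 * (- lam * E t) - f2 t) with ((muh - lam) * m0 * E t - Cvh * Qd).
      2:{ unfold f2, Qd. rewrite Hx. field. auto. } lra.
    - assert (Hx : x2 t = - (m0 * E t)) by lra.
      replace (m0 * (- lam * E t) + f2 t) with ((muh - lam) * m0 * E t + Cvh * Qd).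
      2:{ unfold f2, Qd. rewrite Hx. field. auto. } lra.
    - assert (Hx : c * x4 t = m0 * E t) by lra.
      replace (m0 * (- lam * E t) - c * f4 t) with ((muv - lam) * m0 * E t - Chv * (c * P)).
      2:{ unfold f4, P. assert (muv * (c * x4 t) = muv * (m0 * E t)) by (rewrite Hx; auto). lra. } lra.
    - assert (Hx : c * x4 t = - (m0 * E t)) by lra.
      replace (m0 * (- lam * E t) + c * f4 t) with ((muv - lam) * m0 * E t + Chv * (c * P)).
      2:{ unfold f4, P. assert (muv * (c * x4 t) = muv * (- (m0 * E t))) by (rewrite Hx; auto). lra. } lra. }
  specialize (Hbar Htouch).
  intros t Ht.
  assert (G0 := Hbar 0%nat t ltac:(lia) Ht). assert (G1 := Hbar 1%nat t ltac:(lia) Ht).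
  assert (G2 := Hbar 2%nat t ltac:(lia) Ht). assert (G3 := Hbar 3%nat t ltac:(lia) Ht).
  assert (G4 := Hbar 4%nat t ltac:(lia) Ht). assert (G5 := Hbar 5%nat t ltac:(lia) Ht).
  unfold h, E in G0, G1, G2, G3, G4, G5. cbv beta iota in G0, G1, G2, G3, G4, G5.
  split; [apply Rabs_def1; lra|]. split; [apply Rabs_def1; lra|].
  rewrite <- (Rabs_right c) by lra. rewrite <- Rabs_mult. apply Rabs_def1; lra.
Qed.

Ltac dpl_auto := repeat first [apply dpl_minus | apply dpl_plus | apply dpl_mult | apply dpl_scal | apply dexp | apply dpl_const | apply dpl_id].

Lemma cont_pos_near (f : R -> R) : derivable_pt f 0 -> 0 < f 0 ->
  exists del, 0 < del /\ forall s, 0 <= s < del -> 0 < f s.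
Proof.
  intros Hd Hf. assert (Hc := derivable_continuous_pt f 0 Hd).
  destruct (Hc (f 0) Hf) as [del [Hdel H]]. exists del. split; [lra|].
  intros s Hs. destruct (Req_dec s 0) as [->|Hne]; auto.
  assert (Hh : Rabs (f s - f 0) < f 0).
  { apply (H s). split; [split; [exact I|auto]|]. simpl. unfold R_dist. rewrite Rminus_0_r, Rabs_right; lra. }
  apply Rabs_def2 in Hh. lra.
Qed.

Lemma choose_c (a b : R) : 0 < a -> a < b -> exists c, a < c /\ c < b.
Proof. intros. exists ((a + b) / 2). lra. Qed.

Lemma choose_stab bh bv muh muv Cvh Chv tau :
  0 < bh -> 0 < bv -> 0 < muh -> 0 < muv -> 0 < Cvh -> 0 < Chv -> 0 <= tau ->
  Cvh * Chv * (bh / muh) < muh * muv ->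
  exists c s0, 0 < c /\ 0 < s0 /\ forall s, 0 <= s < s0 ->
    Cvh * exp (s * tau) * (bh / muh + s) < c * (bv / muv - s) * (muh - s) /\
    Chv * (c * (bv / muv + s) + s) < muv - s.
Proof.
  intros Hbh Hbv Hmuh Hmuv HCvh HChv Htau HR.
  set (H := bh / muh) in *. set (V := bv / muv).
  assert (HH : 0 < H) by (unfold H; apply Rdiv_lt_0_compat; lra).
  assert (HV : 0 < V) by (unfold V; apply Rdiv_lt_0_compat; lra).
  assert (HCH : 0 < Cvh * H) by (apply Rmult_lt_0_compat; lra).
  assert (HVm : 0 < V * muh) by (apply Rmult_lt_0_compat; lra).
  assert (HCV : 0 < Chv * V) by (apply Rmult_lt_0_compat; lra).
  assert (Hlo : 0 < Cvh * H / (V * muh)) by (apply Rdiv_lt_0_compat; lra).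
  destruct (choose_c (Cvh * H / (V * muh)) (muv / (Chv * V))) as [c [Hc1 Hc2]]; auto.
  { apply Rmult_lt_reg_r with (V * muh * (Chv * V)); [nra|].
    replace (Cvh * H / (V * muh) * (V * muh * (Chv * V))) with (Cvh * Chv * H * V) by (field; nra).
    replace (muv / (Chv * V) * (V * muh * (Chv * V))) with (muh * muv * V) by (field; nra). nra. }
  assert (Hc : 0 < c) by lra.
  destruct (cont_pos_near (fun s => c * (V - s) * (muh - s) - Cvh * exp (tau * s) * (H + s))) as [d1 [Hd1 P1]].
  { eexists. dpl_auto. }
  { rewrite Rmult_0_r, exp_0.
    apply Rmult_lt_compat_r with (r := V * muh) in Hc1; [|nra].
    replace (Cvh * H / (V * muh) * (V * muh)) with (Cvh * H) in Hc1 by (field; nra). nra. }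
  destruct (cont_pos_near (fun s => muv - s - Chv * (c * (V + s) + s))) as [d2 [Hd2 P2]].
  { eexists. dpl_auto. }
  { apply Rmult_lt_compat_r with (r := Chv * V) in Hc2; [|nra].
    replace (muv / (Chv * V) * (Chv * V)) with muv in Hc2 by (field; nra). nra. }
  exists c, (Rmin d1 d2). split; auto. split; [apply Rmin_glb_lt; auto|].
  intros s Hs. assert (Rmin d1 d2 <= d1) by apply Rmin_l. assert (Rmin d1 d2 <= d2) by apply Rmin_r.
  specialize (P1 s ltac:(lra)). specialize (P2 s ltac:(lra)). cbv beta in P1, P2.
  rewrite (Rmult_comm s tau). split; lra.
Qed.

Lemma stab_bounds bh bv muh muv Cvh Chv tau :
  0 < bh -> 0 < bv -> 0 < muh -> 0 < muv -> 0 < Cvh -> 0 < Chv -> 0 <= tau ->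
  Cvh * Chv * (bh / muh) < muh * muv ->
  forall eps, 0 < eps -> exists d s M, 0 < d /\ 0 < s /\ 0 <= M /\
    forall p1 p2 p3 p4 x1 x2 x3 x4,
      phi_near tau p1 p2 p3 p4 (bh / muh) 0 (bv / muv) 0 d ->
      is_solution bh bv muh muv Cvh Chv tau p1 p2 p3 p4 x1 x2 x3 x4 ->
      forall t, 0 <= t ->
        (Rabs (x1 t - bh / muh) < eps /\ Rabs (x2 t - 0) < eps /\
         Rabs (x3 t - bv / muv) < eps /\ Rabs (x4 t - 0) < eps) /\
        (Rabs (x1 t - bh / muh) <= M * (exp (- s * t) + exp (- muv * t)) /\
         Rabs (x2 t - 0) <= M * (exp (- s * t) + exp (- muv * t)) /\
         Rabs (x3 t - bv / muv) <= M * (exp (- s * t) + exp (- muv * t)) /\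
         Rabs (x4 t - 0) <= M * (exp (- s * t) + exp (- muv * t))).
Proof.
  intros Hbh Hbv Hmuh Hmuv HCvh HChv Htau HR eps Heps.
  destruct (choose_stab bh bv muh muv Cvh Chv tau) as [c [s0 [Hc [Hs0 HP]]]]; auto.
  set (H := bh / muh) in *. set (V := bv / muv) in *.
  assert (HH : 0 < H) by (unfold H; apply Rdiv_lt_0_compat; lra).
  assert (HV : 0 < V) by (unfold V; apply Rdiv_lt_0_compat; lra).
  set (s := Rmin (Rmin (s0 / 2) (eps / 4)) (V / 4)).
  assert (Hs1 : s <= s0 / 2) by (unfold s; eapply Rle_trans; [apply Rmin_l|apply Rmin_l]).
  assert (Hs2 : s <= eps / 4) by (unfold s; eapply Rle_trans; [apply Rmin_l|apply Rmin_r]).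
  assert (Hs3 : s <= V / 4) by (unfold s; apply Rmin_r).
  assert (Hs : 0 < s) by (unfold s; repeat apply Rmin_glb_lt; lra).
  destruct (HP s ltac:(lra)) as [P1 P2].
  assert (Hmus : 0 < muh - s).
  { apply Rnot_le_lt; intro Hle.
    assert (0 < Cvh * exp (s * tau) * (H + s)) by (apply Rmult_lt_0_compat; [apply Rmult_lt_0_compat; [lra|apply exp_pos]|lra]).
    assert (c * (V - s) * (muh - s) <= 0).
    { assert (0 <= c * (V - s)) by (apply Rmult_le_pos; lra).
      replace (c * (V - s) * (muh - s)) with (- (c * (V - s) * (s - muh))) by ring.
      assert (0 <= c * (V - s) * (s - muh)) by (apply Rmult_le_pos; lra). lra. }
    lra. }
  assert (HB3 : 0 < c * (V - s) * (muh - s) * s / (2 * Cvh * (H + s))).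
  { apply Rdiv_lt_0_compat; [repeat apply Rmult_lt_0_compat; lra|].
    repeat apply Rmult_lt_0_compat; lra. }
  set (m0 := Rmin (Rmin s (c * s)) (c * (V - s) * (muh - s) * s / (2 * Cvh * (H + s)))).
  assert (Hm1 : m0 <= s) by (unfold m0; eapply Rle_trans; [apply Rmin_l|apply Rmin_l]).
  assert (Hm2 : m0 <= c * s) by (unfold m0; eapply Rle_trans; [apply Rmin_l|apply Rmin_r]).
  assert (Hm3 : m0 <= c * (V - s) * (muh - s) * s / (2 * Cvh * (H + s))) by (unfold m0; apply Rmin_r).
  assert (Hm0 : 0 < m0) by (unfold m0; repeat apply Rmin_glb_lt; try lra; apply Rmult_lt_0_compat; lra).
  set (d := Rmin (s / 2) (Rmin m0 (m0 / c))).
  assert (Hdd1 : d <= s / 2) by (unfold d; apply Rmin_l).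
  assert (Hdd2 : d <= m0) by (unfold d; eapply Rle_trans; [apply Rmin_r|apply Rmin_l]).
  assert (Hdd3 : d <= m0 / c) by (unfold d; eapply Rle_trans; [apply Rmin_r|apply Rmin_r]).
  assert (Hd : 0 < d) by (unfold d; repeat apply Rmin_glb_lt; try lra; apply Rdiv_lt_0_compat; lra).
  assert (Hcd : c * d <= m0).
  { apply Rmult_le_compat_l with (r := c) in Hdd3; [|lra].
    replace (c * (m0 / c)) with m0 in Hdd3 by (field; lra). auto. }
  assert (K1 : Cvh * exp (s * tau) * (H + s) < c * (V - 2 * d) * (muh - s)).
  { eapply Rlt_le_trans; [apply P1|]. apply Rmult_le_compat_r; [lra|]. apply Rmult_le_compat_l; lra. }
  assert (K2 : Chv * (c * (V + 2 * d) + m0) < muv - s).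
  { eapply Rle_lt_trans; [|apply P2]. apply Rmult_le_compat_l; [lra|].
    assert (c * (V + 2 * d) <= c * (V + s)) by (apply Rmult_le_compat_l; lra). lra. }
  assert (K3 : Cvh * m0 * (H + s) < c * (V - 2 * d) * (muh - s) * s).
  { apply Rle_lt_trans with (c * (V - s) * (muh - s) * s / 2).
    - apply Rmult_le_compat_r with (r := Cvh * (H + s)) in Hm3; [|apply Rmult_le_pos; lra].
      replace (c * (V - s) * (muh - s) * s / (2 * Cvh * (H + s)) * (Cvh * (H + s))) with (c * (V - s) * (muh - s) * s / 2) in Hm3 by (field; lra).
      lra.
    - assert (c * (V - s) * (muh - s) * s <= c * (V - 2 * d) * (muh - s) * s).
      { apply Rmult_le_compat_r; [lra|]. apply Rmult_le_compat_r; [lra|]. apply Rmult_le_compat_l; lra. }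
      assert (0 < c * (V - s) * (muh - s) * s) by (repeat apply Rmult_lt_0_compat; lra).
      lra. }
  exists d, s, (s + 2 * d). split; [auto|split; [auto|split; [lra|]]].
  intros p1 p2 p3 p4 x1 x2 x3 x4 Hnear Hsol t Ht.
  assert (Hcore := stab_core bh bv muh muv Cvh Chv tau s c s m0 d p1 p2 p3 p4 x1 x2 x3 x4
    Hbh Hbv Hmuh Hmuv HCvh HChv Htau Hs Hc Hs Hm0 Hd ltac:(lra) Hdd2 Hcd ltac:(fold V; lra)).
  specialize (Hcore K1 K2 K3 Hnear Hsol t Ht). destruct Hcore as (B1 & B2 & B4).
  assert (HN := sol_N _ _ _ _ _ _ _ _ _ _ _ _ _ _ _ Htau Hmuv Hsol t Ht). fold V in HN.
  destruct Hsol as (_ & _ & _ & _ & Hinit & _).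
  destruct (Hinit 0 ltac:(lra)) as (_ & _ & E3 & E4).
  destruct (Hnear 0 ltac:(lra)) as (_ & _ & Q3 & Q4). rewrite Rminus_0_r in Q4.
  assert (HN0 : Rabs (x3 0 + x4 0 - V) <= 2 * d).
  { rewrite E3, E4. replace (p3 0 + p4 0 - V) with ((p3 0 - V) + p4 0) by ring.
    eapply Rle_trans; [apply Rabs_triang|]. lra. }
  set (E := exp (- s * t)) in *. set (F := exp (- muv * t)) in *.
  assert (HE : 0 < E <= 1) by (split; [apply exp_pos|apply exp_le1; nra]).
  assert (HF : 0 < F <= 1) by (split; [apply exp_pos|apply exp_le1; nra]).
  assert (B4' : Rabs (x4 t) <= s * E).
  { apply Rmult_le_reg_l with c; [lra|]. apply Rle_trans with (m0 * E); [lra|].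
    replace (c * (s * E)) with ((c * s) * E) by ring. apply Rmult_le_compat_r; lra. }
  assert (B3 : Rabs (x3 t - V) <= 2 * d * F + s * E).
  { replace (x3 t - V) with ((x3 t + x4 t - V) - x4 t) by ring.
    eapply Rle_trans; [apply Rabs_triang|]. rewrite Rabs_Ropp. rewrite HN.
    replace (V + (x3 0 + x4 0 - V) * F - V) with ((x3 0 + x4 0 - V) * F) by ring.
    rewrite Rabs_mult, (Rabs_right F) by lra.
    assert (Rabs (x3 0 + x4 0 - V) * F <= 2 * d * F) by (apply Rmult_le_compat_r; lra). lra. }
  rewrite !Rminus_0_r.
  assert (m0 * E <= s * E) by (apply Rmult_le_compat_r; lra).
  assert (s * E <= s) by nra. assert (2 * d * F <= 2 * d) by nra.
  assert (s * E <= (s + 2 * d) * (E + F)) by nra.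
  assert (2 * d * F + s * E <= (s + 2 * d) * (E + F)) by nra.
  fold H in B1. split; [repeat split|repeat split]; lra.
Qed.

Lemma div_nonneg a b : 0 <= a -> 0 < b -> 0 <= a / b.
Proof. intros. unfold Rdiv. apply Rmult_le_pos; auto. left; apply Rinv_0_lt_compat; auto. Qed.

Lemma inst_core bh bv muh muv Cvh Chv tau (c s m q : R) x1 x2 x3 x4 :
  0 < bh -> 0 < bv -> 0 < muh -> 0 < muv -> 0 < Cvh -> 0 < Chv -> 0 <= tau ->
  0 < c -> 0 < s -> 0 < m -> 0 < q -> m < q -> m < c * q -> s < bh / muh -> s < bv / muv ->
  c * (bv / muv) * (muh + s) < Cvh * exp (- s * tau) * (bh / muh - s) ->
  muv + s < c * Chv * (bv / muv - s) ->
  is_solution bh bv muh muv Cvh Chv tau (fun _ => bh / muh) (fun _ => q) (fun _ => bv / muv - q) (fun _ => q)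
    x1 x2 x3 x4 ->
  (forall t, 0 <= t -> Rabs (x1 t - bh / muh) < s /\ Rabs (x2 t - 0) < s /\
                       Rabs (x3 t - bv / muv) < s /\ Rabs (x4 t - 0) < s) ->
  forall t, 0 <= t -> m * exp (s * t) < x2 t.
Proof.
  intros Hbh Hbv Hmuh Hmuv HCvh HChv Htau Hc Hs Hm Hq Hmq Hmcq HsH HsV J1 J2 Hsol Hstay.
  set (H := bh / muh) in *. set (V := bv / muv) in *.
  assert (HH : 0 < H) by (unfold H; apply Rdiv_lt_0_compat; lra).
  assert (HV : 0 < V) by (unfold V; apply Rdiv_lt_0_compat; lra).
  destruct (sol_parts _ _ _ _ _ _ _ _ _ _ _ _ _ _ _ Htau Hsol) as (C1 & C2 & C3 & C4).
  assert (HN := sol_N _ _ _ _ _ _ _ _ _ _ _ _ _ _ _ Htau Hmuv Hsol). fold V in HN.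
  destruct Hsol as (_ & _ & _ & _ & Hinit & Hder).
  destruct (Hinit 0 ltac:(lra)) as (E1 & E2 & E3 & E4).
  assert (HNV : forall t, 0 <= t -> x3 t + x4 t = V).
  { intros t Ht. rewrite HN by auto. rewrite E3, E4. ring. }
  set (G := fun t => exp (s * t)).
  set (f2 := fun t => Cvh * (x4 (t - tau) / (x3 (t - tau) + x4 (t - tau))) * x1 (t - tau) - muh * x2 t).
  set (f4 := fun t => Chv * x2 t * x3 t - muv * x4 t).
  set (h := fun i t => match i with 0%nat => x2 t - m * G t | _ => c * x4 t - m * G t end).
  set (dh := fun i t => match i with 0%nat => f2 t - m * (s * G t) | _ => c * f4 t - m * (s * G t) end).
  assert (HcG : cont_from G 0) by apply cexp.
  assert (HG0 : G 0 = 1) by (unfold G; rewrite Rmult_0_r; apply exp_0).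
  assert (HGp : forall t, 0 < G t) by (intros; apply exp_pos).
  assert (Hbar := barrier 2 h dh).
  specialize (Hbar ltac:(intros i Hi; destruct i as [|[|i]]; [| |lia]; unfold h; cbv beta iota;
      apply cont_from_minus; try apply cont_from_scal; auto)).
  specialize (Hbar ltac:(intros i t Hi Ht; destruct (Hder t Ht) as (D1 & D2 & D3 & D4);
      destruct i as [|[|i]]; [| |lia]; unfold h, dh; cbv beta iota;
      apply dpl_minus; try apply dpl_scal; auto; apply dexp)).
  specialize (Hbar ltac:(intros i Hi; destruct i as [|[|i]]; [| |lia]; unfold h; cbv beta iota;
      rewrite ?E2, ?E4, HG0; lra)).
  assert (Htouch : forall i t, (i < 2)%nat -> 0 < t ->
            (forall j u, (j < 2)%nat -> 0 <= u <= t -> 0 <= h j u) -> h i t = 0 -> 0 < dh i t).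
  { intros i t Hi Ht Hall Hz.
    assert (G0 := Hall 0%nat t ltac:(lia) ltac:(lra)). assert (G1 := Hall 1%nat t ltac:(lia) ltac:(lra)).
    unfold h in G0, G1. cbv beta iota in G0, G1.
    destruct (Hstay t ltac:(lra)) as (S1 & S2 & S3 & S4).
    assert (S3' := abs_le_split _ _ (Rlt_le _ _ S3)).
    destruct i as [|[|i]]; [| |lia]; unfold h in Hz; unfold dh; cbv beta iota in Hz |- *.
    -
      assert (Bd : m * G t * exp (- s * tau) / c <= x4 (t - tau) /\ H - s <= x1 (t - tau) /\
                   x3 (t - tau) + x4 (t - tau) = V).
      { destruct (Rle_or_lt 0 (t - tau)) as [Hu|Hu].
        - assert (Gu := Hall 1%nat (t - tau) ltac:(lia) ltac:(lra)). unfold h in Gu. cbv beta iota in Gu.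
          assert (HGu : G (t - tau) = G t * exp (- s * tau)) by (unfold G; rewrite <- exp_plus; f_equal; ring).
          rewrite HGu in Gu.
          destruct (Hstay (t - tau) Hu) as (T1 & _ & _ & _). apply Rabs_def2 in T1.
          split; [|split; [lra|apply HNV; auto]].
          apply Rmult_le_reg_l with c; auto. replace (c * (m * G t * exp (- s * tau) / c)) with (m * G t * exp (- s * tau)) by (field; lra). lra.
        - destruct (Hinit (t - tau) ltac:(lra)) as (I1 & _ & I3 & I4). rewrite I1, I3, I4.
          split; [|split; [lra|ring]].
          assert (HGe : G t * exp (- s * tau) <= 1).
          { unfold G. rewrite <- exp_plus. apply exp_le1. nra. }
          apply Rmult_le_reg_l with c; auto. replace (c * (m * G t * exp (- s * tau) / c)) with (m * (G t * exp (- s * tau))) by (field; lra).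
          assert (m * (G t * exp (- s * tau)) <= m) by (apply Rmult_le_compat_l with (r := m) in HGe; lra). lra. }
      destruct Bd as (Bd4 & Bd1 & BdN).
      unfold f2. rewrite BdN.
      assert (Hx2 : x2 t = m * G t) by lra. rewrite Hx2.
      assert (Hprod : m * G t * exp (- s * tau) / c * (H - s) <= x4 (t - tau) * x1 (t - tau)).
      { apply Rmult_le_compat; try lra. apply div_nonneg; [|lra].
        apply Rmult_le_pos; [apply Rmult_le_pos; [lra|left; auto]|left; apply exp_pos]. }
      assert (KJ : (muh + s) * (m * G t) < Cvh * (m * G t * exp (- s * tau) / c * (H - s)) / V).
      { apply Rmult_lt_compat_r with (r := m * G t / (c * V)) in J1; [|apply Rdiv_lt_0_compat; [apply Rmult_lt_0_compat; auto|apply Rmult_lt_0_compat; lra]].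
        replace (c * V * (muh + s) * (m * G t / (c * V))) with ((muh + s) * (m * G t)) in J1 by (field; lra).
        replace (Cvh * exp (- s * tau) * (H - s) * (m * G t / (c * V))) with (Cvh * (m * G t * exp (- s * tau) / c * (H - s)) / V) in J1 by (field; lra).
        auto. }
      assert (Cvh * (m * G t * exp (- s * tau) / c * (H - s)) / V <= Cvh * (x4 (t - tau) / V) * x1 (t - tau)).
      { replace (Cvh * (x4 (t - tau) / V) * x1 (t - tau)) with (Cvh * (x4 (t - tau) * x1 (t - tau)) / V) by (field; lra).
        unfold Rdiv. apply Rmult_le_compat_r; [left; apply Rinv_0_lt_compat; lra|]. apply Rmult_le_compat_l; lra. }
      lra.
    - assert (Hx4 : c * x4 t = m * G t) by lra.
      unfold f4.
      assert (Hp : m * G t * (V - s) <= x2 t * x3 t).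
      { apply Rmult_le_compat; try lra. apply Rmult_le_pos; [lra|left; auto]. }
      assert (KJ : (muv + s) * (m * G t) < c * Chv * (m * G t * (V - s))).
      { apply Rmult_lt_compat_r with (r := m * G t) in J2; [|apply Rmult_lt_0_compat; auto].
        replace (c * Chv * (m * G t * (V - s))) with (c * Chv * (V - s) * (m * G t)) by ring. auto. }
      assert (c * Chv * (m * G t * (V - s)) <= c * Chv * (x2 t * x3 t)) by (apply Rmult_le_compat_l; [nra|auto]).
      replace (c * (Chv * x2 t * x3 t - muv * x4 t) - m * (s * G t)) with (c * Chv * (x2 t * x3 t) - muv * (c * x4 t) - m * (s * G t)) by ring.
      rewrite Hx4. lra. }
  intros t Ht. specialize (Hbar Htouch 0%nat t ltac:(lia) Ht). unfold h, G in Hbar. cbv beta iota in Hbar. lra.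
Qed.

Definition cl (a b x : R) : R := Rmax a (Rmin b x).

Lemma cl_range a b x : a <= b -> a <= cl a b x <= b.
Proof. intros. unfold cl. split; [apply Rmax_l|apply Rmax_lub; [auto|apply Rmin_l]]. Qed.

Lemma cl_id a b x : a <= x <= b -> cl a b x = x.
Proof. intros. unfold cl. rewrite Rmin_right by lra. rewrite Rmax_right by lra. auto. Qed.

Lemma cl_lip a b x y : Rabs (cl a b x - cl a b y) <= Rabs (x - y).
Proof.
  unfold cl.
  assert (H1 : Rabs (Rmin b x - Rmin b y) <= Rabs (x - y)).
  { unfold Rmin. destruct (Rle_dec b x), (Rle_dec b y); unfold Rabs; repeat destruct Rcase_abs; lra. }
  assert (H2 : forall u v, Rabs (Rmax a u - Rmax a v) <= Rabs (u - v)).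
  { intros u v. unfold Rmax. destruct (Rle_dec a u), (Rle_dec a v); unfold Rabs; repeat destruct Rcase_abs; lra. }
  eapply Rle_trans; [apply H2|auto].
Qed.

Lemma cl_abs a b x : a <= b -> Rabs (cl a b x) <= Rabs a + Rabs b.
Proof.
  intros Hab. destruct (cl_range a b x Hab). unfold Rabs at 1. destruct Rcase_abs;
  generalize (Rle_abs a) (Rle_abs b) (Rle_abs (-a)) (Rle_abs (-b)); rewrite !Rabs_Ropp; lra.
Qed.

Definition rat (del a b : R) : R := b / Rmax del (a + b).

Lemma rat_range del a b : 0 < del -> 0 <= a -> 0 <= b -> 0 <= rat del a b <= 1.
Proof.
  intros Hd Ha Hb. unfold rat. assert (HM : del <= Rmax del (a + b)) by apply Rmax_l.
  assert (HM2 : a + b <= Rmax del (a + b)) by apply Rmax_r.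
  split.
  - apply Rmult_le_pos; auto. left; apply Rinv_0_lt_compat; lra.
  - apply Rmult_le_reg_r with (Rmax del (a + b)); [lra|].
    unfold Rdiv. rewrite Rmult_assoc, Rinv_l by lra. lra.
Qed.

Lemma rat_lip del a b a' b' Bb : 0 < del -> 0 <= b' <= Bb ->
  Rabs (rat del a b - rat del a' b') <= (1 / del + Bb / (del * del)) * (Rabs (a - a') + Rabs (b - b')).
Proof.
  intros Hd Hb. unfold rat.
  set (D := Rmax del (a + b)). set (D' := Rmax del (a' + b')).
  assert (HD : del <= D) by apply Rmax_l. assert (HD' : del <= D') by apply Rmax_l.
  assert (HDD : Rabs (D - D') <= Rabs (a - a') + Rabs (b - b')).
  { unfold D, D', Rmax. destruct (Rle_dec del (a + b)), (Rle_dec del (a' + b'));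
    unfold Rabs; repeat destruct Rcase_abs; lra. }
  replace (b / D - b' / D') with ((b - b') / D + b' * (D' - D) / (D * D')) by (field; lra).
  eapply Rle_trans; [apply Rabs_triang|].
  assert (H1 : Rabs ((b - b') / D) <= Rabs (b - b') / del).
  { unfold Rdiv. rewrite Rabs_mult, Rabs_inv, (Rabs_right D) by lra.
    apply Rmult_le_compat_l; [apply Rabs_pos|]. apply Rinv_le_contravar; lra. }
  assert (H2 : Rabs (b' * (D' - D) / (D * D')) <= Bb * Rabs (D - D') / (del * del)).
  { unfold Rdiv. rewrite !Rabs_mult, Rabs_inv, Rabs_mult, (Rabs_right D), (Rabs_right D') by lra.
    rewrite (Rabs_right b') by lra. rewrite <- Rabs_Ropp. replace (- (D' - D)) with (D - D') by ring.
    apply Rmult_le_compat; try apply Rmult_le_pos; try apply Rabs_pos; try lra.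
    - left; apply Rinv_0_lt_compat; nra.
    - apply Rmult_le_compat; try lra; apply Rabs_pos.
    - apply Rinv_le_contravar; nra. }
  assert (Hab : 0 <= Rabs (a - a') + Rabs (b - b')) by (generalize (Rabs_pos (a - a')) (Rabs_pos (b - b')); lra).
  assert (Bb * Rabs (D - D') / (del * del) <= Bb / (del * del) * (Rabs (a - a') + Rabs (b - b'))).
  { unfold Rdiv. replace (Bb * / (del * del) * (Rabs (a - a') + Rabs (b - b'))) with (Bb * (Rabs (a - a') + Rabs (b - b')) * / (del * del)) by ring.
    apply Rmult_le_compat_r; [left; apply Rinv_0_lt_compat; nra|]. apply Rmult_le_compat_l; lra. }
  assert (Rabs (b - b') / del <= 1 / del * (Rabs (a - a') + Rabs (b - b'))).
  { unfold Rdiv. rewrite Rmult_1_l. rewrite Rmult_comm. apply Rmult_le_compat_l; [left; apply Rinv_0_lt_compat; lra|].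
    generalize (Rabs_pos (a - a')); lra. }
  lra.
Qed.

Lemma prod_lip x y x' y' Mx My : Rabs x <= Mx -> Rabs y' <= My ->
  Rabs (x * y - x' * y') <= Mx * Rabs (y - y') + My * Rabs (x - x').
Proof.
  intros Hx Hy. replace (x * y - x' * y') with (x * (y - y') + y' * (x - x')) by ring.
  eapply Rle_trans; [apply Rabs_triang|]. rewrite !Rabs_mult.
  apply Rplus_le_compat; apply Rmult_le_compat; try apply Rabs_pos; try lra.
Qed.

Definition Fm (bh bv muh muv Cvh Chv C1 C2 C3 C4 del : R) (i : nat) (u v : nat -> R) : R :=
  match i with
  | 0%nat => bh - Cvh * rat del (cl 0 C3 (u 2%nat)) (cl 0 C4 (u 3%nat)) * cl 0 C1 (u 0%nat) - muh * cl (-1) C1 (u 0%nat)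
  | 1%nat => Cvh * rat del (cl 0 C3 (v 2%nat)) (cl 0 C4 (v 3%nat)) * cl 0 C1 (v 0%nat) - muh * cl (-1) C2 (u 1%nat)
  | 2%nat => bv - Chv * cl 0 C2 (u 1%nat) * cl 0 C3 (u 2%nat) - muv * cl (-1) C3 (u 2%nat)
  | 3%nat => Chv * cl 0 C2 (u 1%nat) * cl 0 C3 (u 2%nat) - muv * cl (-1) C4 (u 3%nat)
  | _ => 0
  end.

Lemma rc_lip del C1 C3 C4 a b c a' b' c' Delta :
  0 < del -> 0 <= C1 -> 0 <= C3 -> 0 <= C4 ->
  Rabs (a - a') <= Delta -> Rabs (b - b') <= Delta -> Rabs (c - c') <= Delta ->
  Rabs (rat del (cl 0 C3 a) (cl 0 C4 b) * cl 0 C1 c - rat del (cl 0 C3 a') (cl 0 C4 b') * cl 0 C1 c')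
   <= (1 + 2 * C1 * (1 / del + C4 / (del * del))) * Delta.
Proof.
  intros Hd H1 H3 H4 Ha Hb Hc.
  destruct (cl_range 0 C3 a H3), (cl_range 0 C4 b H4), (cl_range 0 C1 c H1).
  destruct (cl_range 0 C3 a' H3), (cl_range 0 C4 b' H4), (cl_range 0 C1 c' H1).
  assert (Hr := rat_range del (cl 0 C3 a) (cl 0 C4 b) Hd ltac:(lra) ltac:(lra)).
  eapply Rle_trans; [apply prod_lip with (Mx := 1) (My := C1)|].
  - rewrite Rabs_right; lra.
  - rewrite Rabs_right; lra.
  - assert (Hrl := rat_lip del (cl 0 C3 a) (cl 0 C4 b) (cl 0 C3 a') (cl 0 C4 b') C4 Hd ltac:(lra)).
    assert (Rabs (cl 0 C1 c - cl 0 C1 c') <= Delta) by (eapply Rle_trans; [apply cl_lip|auto]).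
    assert (Rabs (cl 0 C3 a - cl 0 C3 a') <= Delta) by (eapply Rle_trans; [apply cl_lip|auto]).
    assert (Rabs (cl 0 C4 b - cl 0 C4 b') <= Delta) by (eapply Rle_trans; [apply cl_lip|auto]).
    assert (HK : 0 <= 1 / del + C4 / (del * del)).
    { assert (0 < 1 / del) by (apply Rdiv_lt_0_compat; lra).
      assert (0 <= C4 / (del * del)) by (apply div_nonneg; nra). lra. }
    assert (C1 * Rabs (rat del (cl 0 C3 a) (cl 0 C4 b) - rat del (cl 0 C3 a') (cl 0 C4 b')) <=
            C1 * ((1 / del + C4 / (del * del)) * (2 * Delta))).
    { apply Rmult_le_compat_l; auto. eapply Rle_trans; [apply Hrl|]. apply Rmult_le_compat_l; lra. }
    assert (0 <= Delta) by (generalize (Rabs_pos (a - a')); lra).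
    nra.
Qed.

Lemma pc_lip C2 C3 a b a' b' Delta : 0 <= C2 -> 0 <= C3 ->
  Rabs (a - a') <= Delta -> Rabs (b - b') <= Delta ->
  Rabs (cl 0 C2 a * cl 0 C3 b - cl 0 C2 a' * cl 0 C3 b') <= (C2 + C3) * Delta.
Proof.
  intros H2 H3 Ha Hb.
  destruct (cl_range 0 C2 a H2), (cl_range 0 C3 b' H3).
  eapply Rle_trans; [apply prod_lip with (Mx := C2) (My := C3)|].
  - rewrite Rabs_right; lra.
  - rewrite Rabs_right; lra.
  - assert (Rabs (cl 0 C2 a - cl 0 C2 a') <= Delta) by (eapply Rle_trans; [apply cl_lip|auto]).
    assert (Rabs (cl 0 C3 b - cl 0 C3 b') <= Delta) by (eapply Rle_trans; [apply cl_lip|auto]).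
    nra.
Qed.

Lemma Fm_lip bh bv muh muv Cvh Chv C1 C2 C3 C4 del :
  0 < muh -> 0 < muv -> 0 < Cvh -> 0 < Chv -> 0 <= C1 -> 0 <= C2 -> 0 <= C3 -> 0 <= C4 -> 0 < del ->
  FLip 4 (Fm bh bv muh muv Cvh Chv C1 C2 C3 C4 del)
    (Cvh * (1 + 2 * C1 * (1 / del + C4 / (del * del))) + muh + Chv * (C2 + C3) + muv).
Proof.
  intros Hmuh Hmuv HCvh HChv H1 H2 H3 H4 Hd i u v u' v' Hi.
  set (Delta := nrm 4 u u' + nrm 4 v v').
  assert (Hu : forall j, (j < 4)%nat -> Rabs (u j - u' j) <= Delta).
  { intros j Hj. generalize (nrm_comp 4 u u' j Hj) (nrm_nonneg 4 v v'). unfold Delta. lra. }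
  assert (Hv : forall j, (j < 4)%nat -> Rabs (v j - v' j) <= Delta).
  { intros j Hj. generalize (nrm_comp 4 v v' j Hj) (nrm_nonneg 4 u u'). unfold Delta. lra. }
  assert (HD : 0 <= Delta) by (generalize (Hu 0%nat ltac:(lia)) (Rabs_pos (u 0%nat - u' 0%nat)); lra).
  assert (HK : 0 <= 1 / del + C4 / (del * del)).
  { assert (0 < 1 / del) by (apply Rdiv_lt_0_compat; lra).
    assert (0 <= C4 / (del * del)) by (apply div_nonneg; nra). lra. }
  set (Kr := 1 / del + C4 / (del * del)) in *.
  assert (HKr1 : 0 <= Cvh * (1 + 2 * C1 * Kr) * Delta) by (apply Rmult_le_pos; [apply Rmult_le_pos; nra|auto]).
  assert (HKr2 : 0 <= Chv * (C2 + C3) * Delta) by (apply Rmult_le_pos; [apply Rmult_le_pos; lra|auto]).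
  assert (HmD : 0 <= muv * Delta) by (apply Rmult_le_pos; lra).
  assert (HmD2 : 0 <= muh * Delta) by (apply Rmult_le_pos; lra).
  destruct i as [|[|[|[|i]]]]; [| | | |lia]; unfold Fm.
  - assert (A1 := rc_lip del C1 C3 C4 _ _ _ _ _ _ Delta Hd H1 H3 H4 (Hu 2%nat ltac:(lia)) (Hu 3%nat ltac:(lia)) (Hu 0%nat ltac:(lia))). fold Kr in A1.
    assert (A2 : Rabs (cl (-1) C1 (u 0%nat) - cl (-1) C1 (u' 0%nat)) <= Delta) by (eapply Rle_trans; [apply cl_lip|apply Hu; lia]).
    set (r := rat del (cl 0 C3 (u 2%nat)) (cl 0 C4 (u 3%nat)) * cl 0 C1 (u 0%nat)) in *.
    set (r' := rat del (cl 0 C3 (u' 2%nat)) (cl 0 C4 (u' 3%nat)) * cl 0 C1 (u' 0%nat)) in *.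
    replace (bh - Cvh * rat del (cl 0 C3 (u 2%nat)) (cl 0 C4 (u 3%nat)) * cl 0 C1 (u 0%nat) - muh * cl (-1) C1 (u 0%nat) -
      (bh - Cvh * rat del (cl 0 C3 (u' 2%nat)) (cl 0 C4 (u' 3%nat)) * cl 0 C1 (u' 0%nat) - muh * cl (-1) C1 (u' 0%nat)))
      with (- (Cvh * (r - r') + muh * (cl (-1) C1 (u 0%nat) - cl (-1) C1 (u' 0%nat)))) by (unfold r, r'; ring).
    rewrite Rabs_Ropp. eapply Rle_trans; [apply Rabs_triang|]. rewrite !Rabs_mult. try rewrite (Rabs_right muh) by lra; try rewrite (Rabs_right muv) by lra; try rewrite (Rabs_right Cvh) by lra; try rewrite (Rabs_right Chv) by lra.
    assert (Cvh * Rabs (r - r') <= Cvh * ((1 + 2 * C1 * Kr) * Delta)) by (apply Rmult_le_compat_l; lra).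
    assert (muh * Rabs (cl (-1) C1 (u 0%nat) - cl (-1) C1 (u' 0%nat)) <= muh * Delta) by (apply Rmult_le_compat_l; lra).
    lra.
  - assert (A1 := rc_lip del C1 C3 C4 _ _ _ _ _ _ Delta Hd H1 H3 H4 (Hv 2%nat ltac:(lia)) (Hv 3%nat ltac:(lia)) (Hv 0%nat ltac:(lia))). fold Kr in A1.
    assert (A2 : Rabs (cl (-1) C2 (u 1%nat) - cl (-1) C2 (u' 1%nat)) <= Delta) by (eapply Rle_trans; [apply cl_lip|apply Hu; lia]).
    set (r := rat del (cl 0 C3 (v 2%nat)) (cl 0 C4 (v 3%nat)) * cl 0 C1 (v 0%nat)) in *.
    set (r' := rat del (cl 0 C3 (v' 2%nat)) (cl 0 C4 (v' 3%nat)) * cl 0 C1 (v' 0%nat)) in *.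
    replace (Cvh * rat del (cl 0 C3 (v 2%nat)) (cl 0 C4 (v 3%nat)) * cl 0 C1 (v 0%nat) - muh * cl (-1) C2 (u 1%nat) -
      (Cvh * rat del (cl 0 C3 (v' 2%nat)) (cl 0 C4 (v' 3%nat)) * cl 0 C1 (v' 0%nat) - muh * cl (-1) C2 (u' 1%nat)))
      with (Cvh * (r - r') - muh * (cl (-1) C2 (u 1%nat) - cl (-1) C2 (u' 1%nat))) by (unfold r, r'; ring).
    eapply Rle_trans; [apply Rabs_triang|]. rewrite Rabs_Ropp, !Rabs_mult. try rewrite (Rabs_right muh) by lra; try rewrite (Rabs_right muv) by lra; try rewrite (Rabs_right Cvh) by lra; try rewrite (Rabs_right Chv) by lra.
    assert (Cvh * Rabs (r - r') <= Cvh * ((1 + 2 * C1 * Kr) * Delta)) by (apply Rmult_le_compat_l; lra).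
    assert (muh * Rabs (cl (-1) C2 (u 1%nat) - cl (-1) C2 (u' 1%nat)) <= muh * Delta) by (apply Rmult_le_compat_l; lra).
    lra.
  - assert (A1 := pc_lip C2 C3 _ _ _ _ Delta H2 H3 (Hu 1%nat ltac:(lia)) (Hu 2%nat ltac:(lia))).
    assert (A2 : Rabs (cl (-1) C3 (u 2%nat) - cl (-1) C3 (u' 2%nat)) <= Delta) by (eapply Rle_trans; [apply cl_lip|apply Hu; lia]).
    set (r := cl 0 C2 (u 1%nat) * cl 0 C3 (u 2%nat)) in *.
    set (r' := cl 0 C2 (u' 1%nat) * cl 0 C3 (u' 2%nat)) in *.
    replace (bv - Chv * cl 0 C2 (u 1%nat) * cl 0 C3 (u 2%nat) - muv * cl (-1) C3 (u 2%nat) -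
      (bv - Chv * cl 0 C2 (u' 1%nat) * cl 0 C3 (u' 2%nat) - muv * cl (-1) C3 (u' 2%nat)))
      with (- (Chv * (r - r') + muv * (cl (-1) C3 (u 2%nat) - cl (-1) C3 (u' 2%nat)))) by (unfold r, r'; ring).
    rewrite Rabs_Ropp. eapply Rle_trans; [apply Rabs_triang|]. rewrite !Rabs_mult. try rewrite (Rabs_right muh) by lra; try rewrite (Rabs_right muv) by lra; try rewrite (Rabs_right Cvh) by lra; try rewrite (Rabs_right Chv) by lra.
    assert (Chv * Rabs (r - r') <= Chv * ((C2 + C3) * Delta)) by (apply Rmult_le_compat_l; lra).
    assert (muv * Rabs (cl (-1) C3 (u 2%nat) - cl (-1) C3 (u' 2%nat)) <= muv * Delta) by (apply Rmult_le_compat_l; lra).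
    lra.
  - assert (A1 := pc_lip C2 C3 _ _ _ _ Delta H2 H3 (Hu 1%nat ltac:(lia)) (Hu 2%nat ltac:(lia))).
    assert (A2 : Rabs (cl (-1) C4 (u 3%nat) - cl (-1) C4 (u' 3%nat)) <= Delta) by (eapply Rle_trans; [apply cl_lip|apply Hu; lia]).
    set (r := cl 0 C2 (u 1%nat) * cl 0 C3 (u 2%nat)) in *.
    set (r' := cl 0 C2 (u' 1%nat) * cl 0 C3 (u' 2%nat)) in *.
    replace (Chv * cl 0 C2 (u 1%nat) * cl 0 C3 (u 2%nat) - muv * cl (-1) C4 (u 3%nat) -
      (Chv * cl 0 C2 (u' 1%nat) * cl 0 C3 (u' 2%nat) - muv * cl (-1) C4 (u' 3%nat)))
      with (Chv * (r - r') - muv * (cl (-1) C4 (u 3%nat) - cl (-1) C4 (u' 3%nat))) by (unfold r, r'; ring).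
    eapply Rle_trans; [apply Rabs_triang|]. rewrite Rabs_Ropp, !Rabs_mult. try rewrite (Rabs_right muh) by lra; try rewrite (Rabs_right muv) by lra; try rewrite (Rabs_right Cvh) by lra; try rewrite (Rabs_right Chv) by lra.
    assert (Chv * Rabs (r - r') <= Chv * ((C2 + C3) * Delta)) by (apply Rmult_le_compat_l; lra).
    assert (muv * Rabs (cl (-1) C4 (u 3%nat) - cl (-1) C4 (u' 3%nat)) <= muv * Delta) by (apply Rmult_le_compat_l; lra).
    lra.
Qed.

Lemma cl_low a b x : x <= a -> a <= b -> cl a b x = a.
Proof. intros. unfold cl. rewrite Rmin_right by lra. rewrite Rmax_left by lra. auto. Qed.

Lemma Fm_bnd bh bv muh muv Cvh Chv C1 C2 C3 C4 del :
  0 < bh -> 0 < bv -> 0 < muh -> 0 < muv -> 0 < Cvh -> 0 < Chv -> 0 <= C1 -> 0 <= C2 -> 0 <= C3 -> 0 <= C4 -> 0 < del ->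
  FBnd 4 (Fm bh bv muh muv Cvh Chv C1 C2 C3 C4 del)
    (bh + bv + Cvh * C1 + Chv * C2 * C3 + (muh + muv) * (1 + C1 + C2 + C3 + C4)).
Proof.
  intros Hbh Hbv Hmuh Hmuv HCvh HChv H1 H2 H3 H4 Hd i u v Hi.
  assert (W : forall C x, 0 <= C -> Rabs (cl (-1) C x) <= 1 + C).
  { intros C x HC. eapply Rle_trans; [apply cl_abs; lra|]. assert (Rabs (-1) = 1) by (unfold Rabs; destruct Rcase_abs; lra). rewrite (Rabs_right C) by lra. lra. }
  assert (Z : forall C x, 0 <= C -> 0 <= cl 0 C x <= C) by (intros; apply cl_range; auto).
  assert (RR : forall w, 0 <= rat del (cl 0 C3 (w 2%nat)) (cl 0 C4 (w 3%nat)) <= 1).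
  { intros w. apply rat_range; auto; apply Z; auto. }
  destruct i as [|[|[|[|i]]]]; [| | | |lia]; unfold Fm.
  - destruct (RR u). destruct (Z C1 (u 0%nat) H1). assert (W1 := W C1 (u 0%nat) H1).
    apply abs_le_split in W1.
    assert (0 <= rat del (cl 0 C3 (u 2%nat)) (cl 0 C4 (u 3%nat)) * cl 0 C1 (u 0%nat) <= C1) by (split; nra).
    assert (0 <= Cvh * (rat del (cl 0 C3 (u 2%nat)) (cl 0 C4 (u 3%nat)) * cl 0 C1 (u 0%nat)) <= Cvh * C1) by (split; nra).
    assert (- (muh * (1 + C1)) <= muh * cl (-1) C1 (u 0%nat) <= muh * (1 + C1)) by (split; nra).
    assert (0 <= muv * (1 + C1 + C2 + C3 + C4)) by (apply Rmult_le_pos; lra).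
    assert (muh * (1 + C1) <= muh * (1 + C1 + C2 + C3 + C4)) by (apply Rmult_le_compat_l; lra).
    assert (0 <= Chv * C2 * C3) by (apply Rmult_le_pos; [apply Rmult_le_pos|]; lra).
    apply Rabs_le. nra.
  - destruct (RR v). destruct (Z C1 (v 0%nat) H1). assert (W1 := W C2 (u 1%nat) H2).
    apply abs_le_split in W1.
    assert (0 <= rat del (cl 0 C3 (v 2%nat)) (cl 0 C4 (v 3%nat)) * cl 0 C1 (v 0%nat) <= C1) by (split; nra).
    assert (0 <= Cvh * (rat del (cl 0 C3 (v 2%nat)) (cl 0 C4 (v 3%nat)) * cl 0 C1 (v 0%nat)) <= Cvh * C1) by (split; nra).
    assert (- (muh * (1 + C2)) <= muh * cl (-1) C2 (u 1%nat) <= muh * (1 + C2)) by (split; nra).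
    assert (0 <= muv * (1 + C1 + C2 + C3 + C4)) by (apply Rmult_le_pos; lra).
    assert (muh * (1 + C2) <= muh * (1 + C1 + C2 + C3 + C4)) by (apply Rmult_le_compat_l; lra).
    assert (0 <= Chv * C2 * C3) by (apply Rmult_le_pos; [apply Rmult_le_pos|]; lra).
    apply Rabs_le. nra.
  - destruct (Z C2 (u 1%nat) H2), (Z C3 (u 2%nat) H3). assert (W1 := W C3 (u 2%nat) H3).
    apply abs_le_split in W1.
    assert (0 <= Chv * cl 0 C2 (u 1%nat) * cl 0 C3 (u 2%nat) <= Chv * C2 * C3).
    { split; [apply Rmult_le_pos; [apply Rmult_le_pos|]; lra|].
      apply Rmult_le_compat; try apply Rmult_le_pos; try lra. apply Rmult_le_compat_l; lra. }
    assert (- (muv * (1 + C3)) <= muv * cl (-1) C3 (u 2%nat) <= muv * (1 + C3)) by (split; nra).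
    assert (0 <= muh * (1 + C1 + C2 + C3 + C4)) by (apply Rmult_le_pos; lra).
    assert (muv * (1 + C3) <= muv * (1 + C1 + C2 + C3 + C4)) by (apply Rmult_le_compat_l; lra).
    assert (0 <= Cvh * C1) by (apply Rmult_le_pos; lra).
    apply Rabs_le. nra.
  - destruct (Z C2 (u 1%nat) H2), (Z C3 (u 2%nat) H3). assert (W1 := W C4 (u 3%nat) H4).
    apply abs_le_split in W1.
    assert (0 <= Chv * cl 0 C2 (u 1%nat) * cl 0 C3 (u 2%nat) <= Chv * C2 * C3).
    { split; [apply Rmult_le_pos; [apply Rmult_le_pos|]; lra|].
      apply Rmult_le_compat; try apply Rmult_le_pos; try lra. apply Rmult_le_compat_l; lra. }
    assert (- (muv * (1 + C4)) <= muv * cl (-1) C4 (u 3%nat) <= muv * (1 + C4)) by (split; nra).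
    assert (0 <= muh * (1 + C1 + C2 + C3 + C4)) by (apply Rmult_le_pos; lra).
    assert (muv * (1 + C4) <= muv * (1 + C1 + C2 + C3 + C4)) by (apply Rmult_le_compat_l; lra).
    assert (0 <= Cvh * C1) by (apply Rmult_le_pos; lra).
    apply Rabs_le. nra.
Qed.

Lemma lip_cont_from (f : R -> R) K a : 0 <= K -> (forall t s, Rabs (f t - f s) <= K * Rabs (t - s)) -> cont_from f a.
Proof.
  intros HK H x _ eps He. exists (eps / (K + 1)). split; [apply Rdiv_lt_0_compat; lra|].
  intros y _ Hy. eapply Rle_lt_trans; [apply H|].
  apply Rle_lt_trans with ((K + 1) * Rabs (y - x)); [generalize (Rabs_pos (y - x)); nra|].
  apply Rmult_lt_compat_l with (r := K + 1) in Hy; [|lra].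
  replace ((K + 1) * (eps / (K + 1))) with eps in Hy by (field; lra). lra.
Qed.

Lemma construct bh bv muh muv Cvh Chv tau q :
  0 < bh -> 0 < bv -> 0 < muh -> 0 < muv -> 0 < Cvh -> 0 < Chv -> 0 <= tau ->
  0 < q -> q < bv / muv ->
  exists x1 x2 x3 x4, is_solution bh bv muh muv Cvh Chv tau
    (fun _ => bh / muh) (fun _ => q) (fun _ => bv / muv - q) (fun _ => q) x1 x2 x3 x4.
Proof.
  intros Hbh Hbv Hmuh Hmuv HCvh HChv Htau Hq HqV.
  set (H := bh / muh) in *. set (V := bv / muv) in *.
  assert (HH : 0 < H) by (unfold H; apply Rdiv_lt_0_compat; lra).
  assert (HV : 0 < V) by (unfold V; apply Rdiv_lt_0_compat; lra).
  assert (Hbh' : bh = muh * H) by (unfold H; field; lra).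
  assert (Hbv' : bv = muv * V) by (unfold V; field; lra).
  set (C1 := H + 1). set (X2 := q + Cvh * C1 / muh). set (C2 := X2 + 1). set (C3 := V + 1).
  set (X4 := q + Chv * C2 * C3 / muv). set (C4 := X4 + 1). set (del := V / 2).
  assert (HX2 : 0 < X2) by (unfold X2, C1; assert (0 < Cvh * (H + 1) / muh) by (apply Rdiv_lt_0_compat; nra); lra).
  assert (HX4 : 0 < X4) by (unfold X4, C2, C3; assert (0 < Chv * (X2 + 1) * (V + 1) / muv) by (apply Rdiv_lt_0_compat; [apply Rmult_lt_0_compat; [apply Rmult_lt_0_compat|]|]; lra); lra).
  assert (HqX2 : q <= X2) by (unfold X2; assert (0 < Cvh * C1 / muh) by (apply Rdiv_lt_0_compat; unfold C1; nra); lra).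
  assert (HqX4 : q <= X4).
  { unfold X4. assert (0 < Chv * C2 * C3 / muv); [|lra].
    apply Rdiv_lt_0_compat; [apply Rmult_lt_0_compat; [apply Rmult_lt_0_compat|]|]; unfold C2, C3; lra. }
  assert (HmX2 : muh * X2 = muh * q + Cvh * C1) by (unfold X2; field; lra).
  assert (HmX4 : muv * X4 = muv * q + Chv * C2 * C3) by (unfold X4; field; lra).
  set (Xb := fun k => match k with 0%nat => H | 1%nat => X2 | 2%nat => V | _ => X4 end).
  set (Cb := fun k => match k with 0%nat => C1 | 1%nat => C2 | 2%nat => C3 | _ => C4 end).
  set (phi := fun k => match k with 0%nat => H | 1%nat => q | 2%nat => V - q | _ => q end).
  set (F := Fm bh bv muh muv Cvh Chv C1 C2 C3 C4 del).
  set (L := Cvh * (1 + 2 * C1 * (1 / del + C4 / (del * del))) + muh + Chv * (C2 + C3) + muv).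
  set (B := bh + bv + Cvh * C1 + Chv * C2 * C3 + (muh + muv) * (1 + C1 + C2 + C3 + C4)).
  assert (Hdel : 0 < del) by (unfold del; lra).
  assert (HC1 : 0 <= C1) by (unfold C1; lra). assert (HC2 : 0 <= C2) by (unfold C2; lra).
  assert (HC3 : 0 <= C3) by (unfold C3; lra). assert (HC4 : 0 <= C4) by (unfold C4; lra).
  assert (HFL := Fm_lip bh bv muh muv Cvh Chv C1 C2 C3 C4 del Hmuh Hmuv HCvh HChv HC1 HC2 HC3 HC4 Hdel).
  assert (HFB := Fm_bnd bh bv muh muv Cvh Chv C1 C2 C3 C4 del Hbh Hbv Hmuh Hmuv HCvh HChv HC1 HC2 HC3 HC4 Hdel).
  fold F L in HFL. fold F B in HFB.
  assert (HL : 0 < L).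
  { unfold L. assert (0 <= Cvh * (1 + 2 * C1 * (1 / del + C4 / (del * del)))); [|nra].
    apply Rmult_le_pos; [lra|]. assert (0 < 1 / del) by (apply Rdiv_lt_0_compat; lra).
    assert (0 <= C4 / (del * del)) by (apply div_nonneg; nra). nra. }
  assert (HB : 0 <= B).
  { unfold B. assert (0 <= Cvh * C1) by nra. assert (0 <= Chv * C2 * C3) by (apply Rmult_le_pos; nra).
    assert (0 <= (muh + muv) * (1 + C1 + C2 + C3 + C4)) by (apply Rmult_le_pos; lra). lra. }
  destruct (dde_exists 4 tau phi F L B ltac:(lia) Htau HL HB HFL HFB) as [X [Hneg [Hlip Hder]]].
  set (x := fun k t => X t k).
  assert (Hcont : forall k a, (k < 4)%nat -> cont_from (x k) a).
  { intros k a Hk. apply lip_cont_from with B; auto. intros; apply Hlip; auto. }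
  assert (Hlow : forall k t, (k < 4)%nat -> 0 <= x k t).
  { intros k t Hk. destruct (Rle_or_lt t 0) as [Ht|Ht].
    - unfold x. rewrite Hneg by auto. unfold phi. destruct k as [|[|[|[|k]]]]; lra.
    - apply Rnot_lt_le; intro Hlt.
      set (eta := Rmin (1/2) (- x k t / 2)).
      assert (Heta1 : eta <= 1/2) by apply Rmin_l. assert (Heta2 : eta <= - x k t / 2) by apply Rmin_r.
      assert (Heta : 0 < eta) by (apply Rmin_glb_lt; lra).
      assert (Hb := barrier1 (fun s => x k s + eta) (fun s => F k (X s) (X (s - tau)) + 0)).
      specialize (Hb ltac:(apply cont_from_plus; [apply Hcont; auto|apply cont_from_const])).
      specialize (Hb ltac:(intros s Hs; apply dpl_plus; [apply (Hder k s Hk Hs)|apply dpl_const])).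
      specialize (Hb ltac:(unfold x; rewrite Hneg by lra; unfold phi; destruct k as [|[|[|[|k]]]]; lra)).
      assert (Htouch : forall s, 0 < s -> (forall s', 0 <= s' <= s -> 0 <= x k s' + eta) -> x k s + eta = 0 ->
                0 < F k (X s) (X (s - tau)) + 0).
      { intros s Hs _ Hz. rewrite Rplus_0_r. unfold F, Fm. fold (x k s) in Hz.
        assert (Hxk : X s k = - eta) by (unfold x in Hz; lra).
        assert (Z : forall C y, 0 <= C -> 0 <= cl 0 C y <= C) by (intros; apply cl_range; auto).
        destruct k as [|[|[|[|k]]]]; [| | | |lia]; rewrite Hxk.
        - rewrite (cl_low 0 C1 (- eta)) by lra. rewrite (cl_id (-1) C1 (- eta)) by lra. nra.
        - rewrite (cl_id (-1) C2 (- eta)) by lra.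
          assert (Hr := rat_range del (cl 0 C3 (X (s - tau) 2%nat)) (cl 0 C4 (X (s - tau) 3%nat)) Hdel
                    ltac:(apply Z; auto) ltac:(apply Z; auto)).
          destruct (Z C1 (X (s - tau) 0%nat) HC1).
          assert (0 <= Cvh * rat del (cl 0 C3 (X (s - tau) 2%nat)) (cl 0 C4 (X (s - tau) 3%nat)) * cl 0 C1 (X (s - tau) 0%nat))
            by (apply Rmult_le_pos; [apply Rmult_le_pos|]; lra).
          nra.
        - rewrite (cl_low 0 C3 (- eta)) by lra. rewrite (cl_id (-1) C3 (- eta)) by lra. nra.
        - rewrite (cl_id (-1) C4 (- eta)) by lra. destruct (Z C2 (X s 1%nat) HC2), (Z C3 (X s 2%nat) HC3).
          assert (0 <= Chv * cl 0 C2 (X s 1%nat) * cl 0 C3 (X s 2%nat)) by (apply Rmult_le_pos; [apply Rmult_le_pos|]; lra).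
          nra. }
      specialize (Hb Htouch t ltac:(lra)). cbv beta in Hb. lra. }
  assert (Hup : forall k t, (k < 4)%nat -> x k t <= Xb k).
  { intros k t Hk. destruct (Rle_or_lt t 0) as [Ht|Ht].
    - unfold x. rewrite Hneg by auto. unfold phi, Xb. destruct k as [|[|[|[|k]]]]; lra.
    - apply Rnot_lt_le; intro Hlt.
      set (eta := Rmin (1/2) ((x k t - Xb k) / 2)).
      assert (Heta1 : eta <= 1/2) by apply Rmin_l. assert (Heta2 : eta <= (x k t - Xb k) / 2) by apply Rmin_r.
      assert (Heta : 0 < eta) by (apply Rmin_glb_lt; lra).
      assert (Hb := barrier1 (fun s => Xb k + eta - x k s) (fun s => 0 - F k (X s) (X (s - tau)))).
      specialize (Hb ltac:(apply cont_from_minus; [apply cont_from_const|apply Hcont; auto])).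
      specialize (Hb ltac:(intros s Hs; apply dpl_minus; [apply dpl_const|apply (Hder k s Hk Hs)])).
      specialize (Hb ltac:(unfold x; rewrite Hneg by lra; unfold phi, Xb; destruct k as [|[|[|[|k]]]]; lra)).
      assert (Htouch : forall s, 0 < s -> (forall s', 0 <= s' <= s -> 0 <= Xb k + eta - x k s') -> Xb k + eta - x k s = 0 ->
                0 < 0 - F k (X s) (X (s - tau))).
      { intros s Hs _ Hz. unfold F, Fm.
        assert (Hxk : X s k = Xb k + eta) by (unfold x in Hz; lra).
        assert (Z : forall C y, 0 <= C -> 0 <= cl 0 C y <= C) by (intros; apply cl_range; auto).
        destruct k as [|[|[|[|k]]]]; [| | | |lia]; rewrite Hxk; unfold Xb.
        - rewrite (cl_id (-1) C1 (H + eta)) by (unfold C1; lra).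
          assert (Hr := rat_range del (cl 0 C3 (X s 2%nat)) (cl 0 C4 (X s 3%nat)) Hdel
                    ltac:(apply Z; auto) ltac:(apply Z; auto)).
          destruct (Z C1 (H + eta) HC1).
          assert (0 <= Cvh * rat del (cl 0 C3 (X s 2%nat)) (cl 0 C4 (X s 3%nat)) * cl 0 C1 (H + eta))
            by (apply Rmult_le_pos; [apply Rmult_le_pos|]; lra).
          rewrite Hbh'. nra.
        - rewrite (cl_id (-1) C2 (X2 + eta)) by (unfold C2; lra).
          assert (Hr := rat_range del (cl 0 C3 (X (s - tau) 2%nat)) (cl 0 C4 (X (s - tau) 3%nat)) Hdel
                    ltac:(apply Z; auto) ltac:(apply Z; auto)).
          destruct (Z C1 (X (s - tau) 0%nat) HC1).
          assert (rat del (cl 0 C3 (X (s - tau) 2%nat)) (cl 0 C4 (X (s - tau) 3%nat)) * cl 0 C1 (X (s - tau) 0%nat) <= C1) by nra.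
          assert (Cvh * rat del (cl 0 C3 (X (s - tau) 2%nat)) (cl 0 C4 (X (s - tau) 3%nat)) * cl 0 C1 (X (s - tau) 0%nat) <= Cvh * C1)
            by (rewrite Rmult_assoc; apply Rmult_le_compat_l; lra).
          nra.
        - rewrite (cl_id (-1) C3 (V + eta)) by (unfold C3; lra).
          destruct (Z C2 (X s 1%nat) HC2), (Z C3 (V + eta) HC3).
          assert (0 <= Chv * cl 0 C2 (X s 1%nat) * cl 0 C3 (V + eta)) by (apply Rmult_le_pos; [apply Rmult_le_pos|]; lra).
          rewrite Hbv'. nra.
        - rewrite (cl_id (-1) C4 (X4 + eta)) by (unfold C4; lra).
          destruct (Z C2 (X s 1%nat) HC2), (Z C3 (X s 2%nat) HC3).
          assert (Chv * cl 0 C2 (X s 1%nat) * cl 0 C3 (X s 2%nat) <= Chv * C2 * C3).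
          { rewrite Rmult_assoc, (Rmult_assoc Chv). apply Rmult_le_compat_l; [lra|]. apply Rmult_le_compat; lra. }
          nra. }
      specialize (Hb Htouch t ltac:(lra)). cbv beta in Hb. lra. }
  assert (Hin : forall t, (0 <= X t 0%nat <= H) /\ (0 <= X t 1%nat <= X2) /\ (0 <= X t 2%nat <= V) /\ (0 <= X t 3%nat <= X4)).
  { intros t. repeat split; [apply (Hlow 0%nat)|apply (Hup 0%nat)|apply (Hlow 1%nat)|apply (Hup 1%nat)
      |apply (Hlow 2%nat)|apply (Hup 2%nat)|apply (Hlow 3%nat)|apply (Hup 3%nat)]; lia. }
  assert (Hcl : forall t, cl 0 C1 (X t 0%nat) = X t 0%nat /\ cl (-1) C1 (X t 0%nat) = X t 0%nat /\ cl 0 C2 (X t 1%nat) = X t 1%nat /\ cl (-1) C2 (X t 1%nat) = X t 1%nat /\ cl 0 C3 (X t 2%nat) = X t 2%nat /\ cl (-1) C3 (X t 2%nat) = X t 2%nat /\ cl 0 C4 (X t 3%nat) = X t 3%nat /\ cl (-1) C4 (X t 3%nat) = X t 3%nat).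
  { intros t. destruct (Hin t) as (I1 & I2 & I3 & I4).
    unfold C1, C2, C3, C4. repeat split; apply cl_id; lra. }
  assert (HNV : forall t, X t 2%nat + X t 3%nat = V).
  { intros t. destruct (Rle_or_lt t 0) as [Ht|Ht].
    - rewrite !Hneg by auto. unfold phi. ring.
    - assert (HN := N_explicit bv muv (fun s => X s 2%nat + X s 3%nat) Hmuv).
      specialize (HN ltac:(apply cont_from_plus; [apply (Hcont 2%nat 0 ltac:(lia))|apply (Hcont 3%nat 0 ltac:(lia))])).
      specialize (HN ltac:(intros s Hs; eapply dpl_eq; [apply dpl_plus; [apply (Hder 2%nat s ltac:(lia) Hs)|apply (Hder 3%nat s ltac:(lia) Hs)]|];
                 unfold F, Fm; destruct (Hcl s) as (_ & _ & _ & _ & _ & E3 & _ & E4); rewrite E3, E4; ring)).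
      specialize (HN t ltac:(lra)). cbv beta in HN. rewrite !(Hneg 0) in HN by lra. unfold phi in HN. fold V in HN.
      rewrite HN. ring. }
  assert (Hrat : forall t, rat del (X t 2%nat) (X t 3%nat) = X t 3%nat / (X t 2%nat + X t 3%nat)).
  { intros t. unfold rat. rewrite HNV. rewrite Rmax_right by (unfold del; lra). auto. }
  exists (x 0%nat), (x 1%nat), (x 2%nat), (x 3%nat).
  split; [apply Hcont; lia|]. split; [apply Hcont; lia|]. split; [apply Hcont; lia|]. split; [apply Hcont; lia|].
  split.
  - intros th Hth. unfold x. rewrite !Hneg by lra. unfold phi. fold H V. repeat split.
  - intros t Ht. unfold x.
    destruct (Hcl t) as (E1 & E1' & E2 & E2' & E3 & E3' & E4 & E4').
    destruct (Hcl (t - tau)) as (D1 & D1' & D2 & D2' & D3 & D3' & D4 & D4').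
    split; [|split; [|split]].
    + eapply dpl_eq; [apply (Hder 0%nat t ltac:(lia) Ht)|]. unfold F, Fm. rewrite E1, E1', E3, E4, Hrat. fold H. ring.
    + eapply dpl_eq; [apply (Hder 1%nat t ltac:(lia) Ht)|]. unfold F, Fm. rewrite D1, D3, D4, E2', Hrat. ring.
    + eapply dpl_eq; [apply (Hder 2%nat t ltac:(lia) Ht)|]. unfold F, Fm. rewrite E2, E3, E3'. ring.
    + eapply dpl_eq; [apply (Hder 3%nat t ltac:(lia) Ht)|]. unfold F, Fm. rewrite E2, E3, E4'. ring.
Qed.

Lemma choose_inst bh bv muh muv Cvh Chv tau :
  0 < bh -> 0 < bv -> 0 < muh -> 0 < muv -> 0 < Cvh -> 0 < Chv -> 0 <= tau ->
  muh * muv < Cvh * Chv * (bh / muh) ->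
  exists c s0, 0 < c /\ 0 < s0 /\ forall s, 0 <= s < s0 ->
    c * (bv / muv) * (muh + s) < Cvh * exp (- s * tau) * (bh / muh - s) /\
    muv + s < c * Chv * (bv / muv - s).
Proof.
  intros Hbh Hbv Hmuh Hmuv HCvh HChv Htau HR.
  set (H := bh / muh) in *. set (V := bv / muv).
  assert (HH : 0 < H) by (unfold H; apply Rdiv_lt_0_compat; lra).
  assert (HV : 0 < V) by (unfold V; apply Rdiv_lt_0_compat; lra).
  assert (HCH : 0 < Cvh * H) by (apply Rmult_lt_0_compat; lra).
  assert (HVm : 0 < V * muh) by (apply Rmult_lt_0_compat; lra).
  assert (HCV : 0 < Chv * V) by (apply Rmult_lt_0_compat; lra).
  assert (Hlo : 0 < muv / (Chv * V)) by (apply Rdiv_lt_0_compat; lra).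
  destruct (choose_c (muv / (Chv * V)) (Cvh * H / (V * muh))) as [c [Hc1 Hc2]]; auto.
  { apply Rmult_lt_reg_r with (V * muh * (Chv * V)); [nra|].
    replace (Cvh * H / (V * muh) * (V * muh * (Chv * V))) with (Cvh * Chv * H * V) by (field; nra).
    replace (muv / (Chv * V) * (V * muh * (Chv * V))) with (muh * muv * V) by (field; nra). nra. }
  assert (Hc : 0 < c) by lra.
  destruct (cont_pos_near (fun s => Cvh * exp (- tau * s) * (H - s) - c * V * (muh + s))) as [d1 [Hd1 P1]].
  { eexists. dpl_auto. }
  { rewrite Rmult_0_r, exp_0.
    apply Rmult_lt_compat_r with (r := V * muh) in Hc2; [|nra].
    replace (Cvh * H / (V * muh) * (V * muh)) with (Cvh * H) in Hc2 by (field; nra). nra. }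
  destruct (cont_pos_near (fun s => c * Chv * (V - s) - muv - s)) as [d2 [Hd2 P2]].
  { eexists. dpl_auto. }
  { apply Rmult_lt_compat_r with (r := Chv * V) in Hc1; [|nra].
    replace (muv / (Chv * V) * (Chv * V)) with muv in Hc1 by (field; nra). nra. }
  exists c, (Rmin d1 d2). split; auto. split; [apply Rmin_glb_lt; auto|].
  intros s Hs. assert (Rmin d1 d2 <= d1) by apply Rmin_l. assert (Rmin d1 d2 <= d2) by apply Rmin_r.
  specialize (P1 s ltac:(lra)). specialize (P2 s ltac:(lra)). cbv beta in P1, P2.
  replace (- s * tau) with (- tau * s) by ring. split; lra.
Qed.

Lemma exp_small k eta : 0 < k -> 0 < eta -> exists T, 0 <= T /\ forall t, T <= t -> exp (- k * t) < eta.
Proof.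
  intros Hk He. exists ((Rabs (ln eta) + 1) / k). split.
  { apply div_nonneg; [generalize (Rabs_pos (ln eta)); lra|auto]. }
  intros t Ht. rewrite <- (exp_ln eta He).
  apply Rle_lt_trans with (exp (- k * ((Rabs (ln eta) + 1) / k))).
  - destruct (Req_dec t ((Rabs (ln eta) + 1) / k)) as [->|Hne]; [lra|].
    left. apply exp_increasing.
    assert (0 < k * (t - (Rabs (ln eta) + 1) / k)) by (apply Rmult_lt_0_compat; lra). lra.
  - apply exp_increasing. replace (- k * ((Rabs (ln eta) + 1) / k)) with (- (Rabs (ln eta) + 1)) by (field; lra).
    generalize (Rle_abs (- ln eta)); rewrite Rabs_Ropp; lra.
Qed.

Lemma cont_on_const c a b : cont_on (fun _ => c) a b.
Proof. intros x _ eps He. exists 1. split; [lra|]. intros. rewrite Rminus_diag, Rabs_R0. lra. Qed.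

Theorem theorem2 (bh bv muh muv Cvh Chv tau : R) :
  0 < bh -> 0 < bv -> 0 < muh -> 0 < muv -> 0 < Cvh -> 0 < Chv -> 0 <= tau ->
  (sqrt (Cvh * Chv * bh / (muh ^ 2 * muv)) < 1 ->
     loc_asym_stable bh bv muh muv Cvh Chv tau (bh / muh) 0 (bv / muv) 0) /\
  (sqrt (Cvh * Chv * bh / (muh ^ 2 * muv)) > 1 ->
     eq_unstable bh bv muh muv Cvh Chv tau (bh / muh) 0 (bv / muv) 0).
Proof.
  intros Hbh Hbv Hmuh Hmuv HCvh HChv Htau.
  set (X := Cvh * Chv * bh / (muh ^ 2 * muv)).
  assert (HX : Cvh * Chv * (bh / muh) = X * (muh * muv)) by (unfold X; field; lra).
  assert (Hmm : 0 < muh * muv) by (apply Rmult_lt_0_compat; lra).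
  split.
  - intros HR.
    assert (HX1 : X < 1).
    { destruct (Rlt_or_le X 1) as [|Hle]; auto. apply sqrt_le_1_alt in Hle. rewrite sqrt_1 in Hle. lra. }
    assert (HR' : Cvh * Chv * (bh / muh) < muh * muv) by (rewrite HX; nra).
    split.
    + intros eps Heps.
      destruct (stab_bounds bh bv muh muv Cvh Chv tau Hbh Hbv Hmuh Hmuv HCvh HChv Htau HR' eps Heps)
        as [d [s [M [Hd [Hs [HM Hb]]]]]].
      exists d. split; auto. intros p1 p2 p3 p4 x1 x2 x3 x4 _ Hnear Hsol t Ht.
      destruct (Hb p1 p2 p3 p4 x1 x2 x3 x4 Hnear Hsol t Ht) as [B _]. exact B.
    + destruct (stab_bounds bh bv muh muv Cvh Chv tau Hbh Hbv Hmuh Hmuv HCvh HChv Htau HR' 1 ltac:(lra))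
        as [d [s [M [Hd [Hs [HM Hb]]]]]].
      exists d. split; auto. intros p1 p2 p3 p4 x1 x2 x3 x4 _ Hnear Hsol eps Heps.
      set (eta := eps / (2 * (M + 1))).
      assert (Heta : 0 < eta) by (apply Rdiv_lt_0_compat; lra).
      destruct (exp_small s eta Hs Heta) as [T1 [HT1 H1]].
      destruct (exp_small muv eta Hmuv Heta) as [T2 [HT2 H2]].
      exists (Rmax T1 T2). intros t Ht.
      assert (T1 <= t) by (eapply Rle_trans; [apply Rmax_l|apply Ht]).
      assert (T2 <= t) by (eapply Rle_trans; [apply Rmax_r|apply Ht]).
      specialize (H1 t ltac:(lra)). specialize (H2 t ltac:(lra)).
      destruct (Hb p1 p2 p3 p4 x1 x2 x3 x4 Hnear Hsol t ltac:(lra)) as [_ (B1 & B2 & B3 & B4)].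
      assert (Hk : M * (exp (- s * t) + exp (- muv * t)) < eps).
      { apply Rle_lt_trans with (M * (2 * eta)).
        - apply Rmult_le_compat_l; lra.
        - unfold eta. replace (M * (2 * (eps / (2 * (M + 1))))) with (eps * (M / (M + 1))) by (field; lra).
          assert (M / (M + 1) < 1).
          { apply Rmult_lt_reg_r with (M + 1); [lra|]. unfold Rdiv. rewrite Rmult_assoc, Rinv_l by lra. lra. }
          nra. }
      repeat split; lra.
  - intros HR.
    assert (HX1 : 1 < X).
    { destruct (Rlt_or_le 1 X) as [|Hle]; auto. apply sqrt_le_1_alt in Hle. rewrite sqrt_1 in Hle. lra. }
    assert (HR' : muh * muv < Cvh * Chv * (bh / muh)) by (rewrite HX; nra).
    intro Hst.
    destruct (choose_inst bh bv muh muv Cvh Chv tau Hbh Hbv Hmuh Hmuv HCvh HChv Htau HR') as [c [s0 [Hc [Hs0 HJ]]]].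
    set (H := bh / muh) in *. set (V := bv / muv) in *.
    assert (HH : 0 < H) by (unfold H; apply Rdiv_lt_0_compat; lra).
    assert (HV : 0 < V) by (unfold V; apply Rdiv_lt_0_compat; lra).
    set (s := Rmin (s0 / 2) (Rmin (H / 2) (V / 2))).
    assert (Hs1 : s <= s0 / 2) by apply Rmin_l.
    assert (Hs2 : s <= H / 2) by (eapply Rle_trans; [apply Rmin_r|apply Rmin_l]).
    assert (Hs3 : s <= V / 2) by (eapply Rle_trans; [apply Rmin_r|apply Rmin_r]).
    assert (Hs : 0 < s) by (unfold s; repeat apply Rmin_glb_lt; lra).
    destruct (HJ s ltac:(lra)) as [J1 J2].
    destruct (Hst s Hs) as [d [Hd Hst2]].
    set (q := Rmin (d / 2) (V / 2)).
    assert (Hq1 : q <= d / 2) by apply Rmin_l. assert (Hq2 : q <= V / 2) by apply Rmin_r.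
    assert (Hq : 0 < q) by (unfold q; apply Rmin_glb_lt; lra).
    destruct (construct bh bv muh muv Cvh Chv tau q Hbh Hbv Hmuh Hmuv HCvh HChv Htau Hq ltac:(fold V; lra))
      as [x1 [x2 [x3 [x4 Hsol]]]].
    fold H V in Hsol.
    assert (Hin : in_Cplus tau (fun _ => H) (fun _ => q) (fun _ => V - q) (fun _ => q)).
    { repeat split; try apply cont_on_const; lra. }
    assert (Hnear : phi_near tau (fun _ => H) (fun _ => q) (fun _ => V - q) (fun _ => q) H 0 V 0 d).
    { intros th _. rewrite Rminus_diag, Rabs_R0, Rminus_0_r.
      replace (V - q - V) with (- q) by ring. rewrite Rabs_Ropp, Rabs_right by lra. repeat split; lra. }
    assert (Hstay := Hst2 _ _ _ _ x1 x2 x3 x4 Hin Hnear Hsol).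
    set (m := Rmin q (c * q) / 2).
    assert (Hcq : 0 < c * q) by (apply Rmult_lt_0_compat; lra).
    assert (Hm1 : m < q) by (unfold m; generalize (Rmin_l q (c * q)); intros; lra).
    assert (Hm2 : m < c * q) by (unfold m; generalize (Rmin_r q (c * q)); intros; lra).
    assert (Hm : 0 < m) by (unfold m; assert (0 < Rmin q (c * q)) by (apply Rmin_glb_lt; lra); lra).
    assert (Hcore := inst_core bh bv muh muv Cvh Chv tau c s m q x1 x2 x3 x4 Hbh Hbv Hmuh Hmuv HCvh HChv Htau
       Hc Hs Hm Hq Hm1 Hm2 ltac:(fold H; lra) ltac:(fold V; lra) J1 J2 Hsol Hstay).
    specialize (Hcore (1 / m) ltac:(left; apply Rdiv_lt_0_compat; lra)).
    destruct (Hstay (1 / m) ltac:(left; apply Rdiv_lt_0_compat; lra)) as (_ & S2 & _ & _).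
    rewrite Rminus_0_r in S2. apply Rabs_def2 in S2.
    assert (Hp : 0 < s * (1 / m)) by (apply Rmult_lt_0_compat; [lra|apply Rdiv_lt_0_compat; lra]).
    assert (He := exp_ineq1 (s * (1 / m)) ltac:(lra)).
    assert (m * (1 + s * (1 / m)) = m + s) by (field; lra).
    assert (m * (1 + s * (1 / m)) < m * exp (s * (1 / m))) by (apply Rmult_lt_compat_l; lra).
    lra.
Qed.
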